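(* $\mu$-almost surely, for every $m\in\mathbb Z$ the value $\phi(m)$ is finite; that is, almost surely every burger is eventually consumed by some order and every order consumes some earlier burger.
   Context: Fix an integer $k\ge 2$ and $p\in[0,1]$. Let $\Theta=\{b_1,\dots,b_k,o_1,\dots,o_k,F\}$, where $b_i$ is a burger of type $i$, $o_i$ is an order of type $i$, and $F$ is a flexible order. Words in $\Theta$ are considered modulo the relations $b_io_i=b_iF=\varnothing$ and $b_io_j=o_jb_i$ for $i\ne j$. Concretely, reading a word left to right, each $o_i$ consumes the most recent not-yet-consumed $b_i$ to its left, and each $F$ consumes the most recent not-yet-consumed burger of any type to its left. Let $(X(n))_{n\in\mathbb Z}$ be i.i.d. $\Theta$-valued random variables with $\mathbb P(X(n)=b_i)=\frac1{2k}$, $\mathbb P(X(n)=o_i)=\frac{1-p}{2k}$ for each $i$, and $\mathbb P(X(n)=F)=\frac p2$; let $\mu$ denote their law on $\Theta^{\mathbb Z}$. If the burger $X(m)$ is consumed by the order $X(n)$ (with $m<n$), set $\phi(m)=n$ and $\phi(n)=m$. If a burger $X(m)$ is never consumed, set $\phi(m)=\infty$. If an order $X(n)$ consumes no burger, set $\phi(n)=-\infty$. *)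

(* Defs.v *)
From Stdlib Require Import Reals ZArith List.
Import ListNotations.
Open Scope R_scope.

(* The alphabet Theta.  Burger i / Order i for burger/order of type i
   (only 0 <= i < k are relevant; others get probability 0), Flex = F. *)
Inductive theta : Type :=
| Burger : nat -> theta
| Order  : nat -> theta
| Flex   : theta.

Definition law (k : nat) (p : R) (c : theta) : R :=
  match c with
  | Burger i => if Nat.ltb i k then / (2 * INR k) else 0
  | Order i  => if Nat.ltb i k then (1 - p) / (2 * INR k) else 0
  | Flex     => p / 2
  end.

(* ---- The burger matching (stack algorithm on a finite word) ----
   A stack is a list of (position, type) of not-yet-consumed burgers,
   most recent first. *)
Fixpoint remove_first_type (i : nat) (st : list (Z * nat))
  : option (Z * list (Z * nat)) :=
  match st with
  | [] => None
  | (j, t) :: st' =>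
      if Nat.eqb t i then Some (j, st')
      else match remove_first_type i st' with
           | Some (j', st'') => Some (j', (j, t) :: st'')
           | None => None
           end
  end.

Definition consume (c : theta) (st : list (Z * nat))
  : option (Z * list (Z * nat)) :=
  match c with
  | Burger _ => None
  | Order i => remove_first_type i st
  | Flex => match st with
            | [] => None
            | (j, _) :: st' => Some (j, st')
            end
  end.

Definition step (st : list (Z * nat)) (jc : Z * theta) : list (Z * nat) :=
  let (j, c) := jc in
  match c with
  | Burger i => (j, i) :: st
  | _ => match consume c st with
         | Some (_, st') => st'
         | None => st
         end
  end.

Definition positions (m n : Z) : list Z :=
  map (fun i => (m + Z.of_nat i)%Z) (seq 0 (Z.to_nat (n - m))).

Definition stack_between (x : Z -> theta) (m n : Z) : list (Z * nat) :=
  fold_left step (map (fun j => (j, x j)) (positions m n)) [].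

(* [matched x m n]: the order X(n) consumes the burger X(m), i.e.
   phi(m) = n and phi(n) = m.  Whether this happens in the bi-infinite word
   depends only on the finite segment x(m..n), and is computed by running
   the stack algorithm on that segment. *)
Definition matched (x : Z -> theta) (m n : Z) : Prop :=
  (m < n)%Z /\
  match consume (x n) (stack_between x m n) with
  | Some (j, _) => j = m
  | None => False
  end.

Definition phi_finite (x : Z -> theta) (m : Z) : Prop :=
  exists n : Z, matched x m n \/ matched x n m.

Definition is_probability_space (Omega : Type)
  (meas : (Omega -> Prop) -> Prop) (P : (Omega -> Prop) -> R) : Prop :=
  meas (fun _ => True) /\
  (forall A, meas A -> meas (fun w => ~ A w)) /\
  (forall E : nat -> Omega -> Prop,
      (forall n, meas (E n)) -> meas (fun w => exists n, E n w)) /\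
  (forall A, meas A -> 0 <= P A) /\
  P (fun _ => True) = 1 /\
  (forall E : nat -> Omega -> Prop,
      (forall n, meas (E n)) ->
      (forall i j w, i <> j -> E i w -> E j w -> False) ->
      infinite_sum (fun n => P (E n)) (P (fun w => exists n, E n w))).

Definition iid_with_law (Omega : Type)
  (meas : (Omega -> Prop) -> Prop) (P : (Omega -> Prop) -> R)
  (X : Z -> Omega -> theta) (k : nat) (p : R) : Prop :=
  (forall n c, meas (fun w => X n w = c)) /\
  (forall (ns : list Z) (cs : list theta),
      NoDup ns -> length ns = length cs ->
      P (fun w => Forall2 (fun n c => X n w = c) ns cs)
      = fold_right Rmult 1 (map (law k p) cs)).

(* Main.v *)
Require Import Defs.
From Stdlib Require Import Reals ZArith List Lia Lra Permutation FinFun Classical FunctionalExtensionality PropExtensionality Wf_nat.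
Import ListNotations.
Open Scope R_scope.


Open Scope R_scope.

Definition lsum {A} (f : A -> R) (l : list A) : R :=
  fold_right (fun x acc => f x + acc) 0 l.

Lemma lsum_app {A} (f : A -> R) l1 l2 : lsum f (l1 ++ l2) = lsum f l1 + lsum f l2.
Proof. induction l1; simpl; [lra|rewrite IHl1; lra]. Qed.

Lemma lsum_map {A B} (f : B -> R) (g : A -> B) l : lsum f (map g l) = lsum (fun x => f (g x)) l.
Proof. induction l; simpl; auto. rewrite IHl; auto. Qed.

Lemma lsum_ext_in {A} (f g : A -> R) l : (forall x, In x l -> f x = g x) -> lsum f l = lsum g l.
Proof. induction l; simpl; intros H; auto. rewrite H, IHl; auto. Qed.

Lemma lsum_le_in {A} (f g : A -> R) l : (forall x, In x l -> f x <= g x) -> lsum f l <= lsum g l.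
Proof. induction l; simpl; intros H; [lra|]. pose proof (H a (or_introl eq_refl)).
  pose proof (IHl (fun x h => H x (or_intror h))). lra. Qed.

Lemma lsum_plus {A} (f g : A -> R) l : lsum (fun x => f x + g x) l = lsum f l + lsum g l.
Proof. induction l; simpl; [lra|rewrite IHl; lra]. Qed.

Lemma lsum_scal {A} (a : R) (f : A -> R) l : lsum (fun x => a * f x) l = a * lsum f l.
Proof. induction l; simpl; [lra|rewrite IHl; lra]. Qed.

Lemma lsum_const_seq (a : R) n m : lsum (fun _ => a) (seq m n) = INR n * a.
Proof. revert m; induction n; intros m. - simpl; lra. - change (lsum (fun _ => a) (seq m (S n))) with (a + lsum (fun _ => a) (seq (S m) n)). rewrite IHn, S_INR; lra. Qed.

Lemma lsum_perm {A} (f : A -> R) l l' : Permutation l l' -> lsum f l = lsum f l'.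
Proof. induction 1; simpl; lra. Qed.

Lemma lsum_nonneg {A} (f : A -> R) l : (forall x, In x l -> 0 <= f x) -> 0 <= lsum f l.
Proof. induction l; simpl; intros H; [lra|]. pose proof (H a (or_introl eq_refl)).
  pose proof (IHl (fun x h => H x (or_intror h))). lra. Qed.

Definition Sig (k : nat) : list theta :=
  map Burger (seq 0 k) ++ map Order (seq 0 k) ++ [Flex].

Fixpoint Ew (k : nat) (p : R) (n : nat) (f : list theta -> R) : R :=
  match n with
  | O => f []
  | S n' => lsum (fun c => law k p c * Ew k p n' (fun w => f (c :: w))) (Sig k)
  end.

Lemma law_nonneg k p c : (1 <= k)%nat -> 0 <= p <= 1 -> 0 <= law k p c.
Proof.
  intros Hk Hp. assert (0 < INR k) by (apply lt_0_INR; lia).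
  destruct c; simpl; try (destruct (Nat.ltb n k)); try lra.
  - apply Rlt_le, Rinv_0_lt_compat; lra.
  - unfold Rdiv. apply Rmult_le_pos; [lra|]. apply Rlt_le, Rinv_0_lt_compat; lra.
Qed.

Lemma lsum_Sig k (h : theta -> R) :
  lsum h (Sig k) = lsum (fun i => h (Burger i)) (seq 0 k) + lsum (fun i => h (Order i)) (seq 0 k) + h Flex.
Proof. unfold Sig. rewrite !lsum_app, !lsum_map. simpl. lra. Qed.

Lemma law_sum k p : (1 <= k)%nat -> lsum (law k p) (Sig k) = 1.
Proof.
  intros Hk. rewrite lsum_Sig.
  assert (0 < INR k) by (apply lt_0_INR; lia).
  rewrite (lsum_ext_in _ (fun _ => / (2 * INR k))).
  2:{ intros x Hx. apply in_seq in Hx. simpl. destruct (Nat.ltb_spec x k); [auto|lia]. }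
  rewrite (lsum_ext_in (fun i => law k p (Order i)) (fun _ => (1 - p) / (2 * INR k))).
  2:{ intros x Hx. apply in_seq in Hx. simpl. destruct (Nat.ltb_spec x k); [auto|lia]. }
  rewrite !lsum_const_seq. simpl. field. lra.
Qed.

Definition valid k (w : list theta) := Forall (fun c => In c (Sig k)) w.

Lemma Ew_ext k p n f g : (forall w, length w = n -> valid k w -> f w = g w) -> Ew k p n f = Ew k p n g.
Proof.
  revert f g; induction n; intros f g H; simpl.
  - apply H; [auto|constructor].
  - apply lsum_ext_in. intros c Hc. f_equal. apply IHn. intros w Hl Hv. apply H; simpl; auto.
    constructor; auto.
Qed.

Lemma Ew_le k p n f g : (1 <= k)%nat -> 0 <= p <= 1 ->
  (forall w, length w = n -> valid k w -> f w <= g w) -> Ew k p n f <= Ew k p n g.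
Proof.
  intros Hk Hp. revert f g; induction n; intros f g H; simpl.
  - apply H; [auto|constructor].
  - apply lsum_le_in. intros c Hc. apply Rmult_le_compat_l. apply law_nonneg; auto.
    apply IHn. intros w Hl Hv. apply H; simpl; auto. constructor; auto.
Qed.

Lemma Ew_plus k p n f g : Ew k p n (fun w => f w + g w) = Ew k p n f + Ew k p n g.
Proof.
  revert f g; induction n; intros f g; simpl; auto.
  rewrite <- lsum_plus. apply lsum_ext_in. intros c _. rewrite IHn. lra.
Qed.

Lemma Ew_scal k p n a f : Ew k p n (fun w => a * f w) = a * Ew k p n f.
Proof.
  revert f; induction n; intros f; simpl; auto.
  rewrite <- lsum_scal. apply lsum_ext_in. intros c _. rewrite IHn. lra.
Qed.

Lemma Ew_const k p n a : (1 <= k)%nat -> Ew k p n (fun _ => a) = a.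
Proof.
  intros Hk. induction n; simpl; auto.
  rewrite (lsum_ext_in _ (fun c => a * law k p c)).
  2:{ intros. rewrite IHn. lra. }
  rewrite lsum_scal, law_sum; auto; lra.
Qed.

Lemma Ew_app k p n m h : Ew k p (n + m) h = Ew k p n (fun u => Ew k p m (fun v => h (u ++ v))).
Proof.
  revert h; induction n; intros h; simpl; auto.
  apply lsum_ext_in. intros c _. rewrite IHn. reflexivity.
Qed.

Lemma Ew_firstn k p n m f : (1 <= k)%nat -> Ew k p (n + m) (fun w => f (firstn n w)) = Ew k p n f.
Proof.
  intros Hk. rewrite Ew_app. apply Ew_ext. intros u Hu _.
  rewrite (Ew_ext _ _ _ _ (fun _ => f u)). apply Ew_const; auto.
  intros v _ _. rewrite firstn_app, Hu, Nat.sub_diag, firstn_O, app_nil_r, <- Hu, firstn_all. auto.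
Qed.

Lemma Ew_skipn k p n m f : (1 <= k)%nat -> Ew k p (n + m) (fun w => f (skipn n w)) = Ew k p m f.
Proof.
  intros Hk. rewrite Ew_app. rewrite (Ew_ext _ _ _ _ (fun _ => Ew k p m f)). apply Ew_const; auto.
  intros u Hu _. apply Ew_ext. intros v _ _. rewrite skipn_app, Hu, Nat.sub_diag, skipn_O.
  rewrite <- Hu, skipn_all. auto.
Qed.

Lemma Ew_prod k p n m f g : (1 <= k)%nat ->
  Ew k p (n + m) (fun w => f (firstn n w) * g (skipn n w)) = Ew k p n f * Ew k p m g.
Proof.
  intros Hk. rewrite Ew_app. rewrite (Ew_ext _ _ _ _ (fun u => Ew k p m g * f u)).
  rewrite Ew_scal. lra.
  intros u Hu _. rewrite (Ew_ext _ _ _ _ (fun v => f u * g v)). rewrite Ew_scal. lra.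
  intros v _ _. rewrite firstn_app, skipn_app, Hu, Nat.sub_diag, firstn_O, skipn_O, app_nil_r.
  rewrite <- Hu, firstn_all, skipn_all. auto.
Qed.


Open Scope nat_scope.

Fixpoint tremove (i : nat) (l : list nat) : option (list nat) :=
  match l with
  | [] => None
  | t :: l' => if Nat.eqb t i then Some l'
               else match tremove i l' with Some l'' => Some (t :: l'') | None => None end
  end.

Definition tcons (c : theta) (l : list nat) : option (list nat) :=
  match c with
  | Burger _ => None
  | Order i => tremove i l
  | Flex => match l with [] => None | _ :: l' => Some l' end
  end.

Definition tstep (l : list nat) (c : theta) : list nat :=
  match c with
  | Burger i => i :: l
  | _ => match tcons c l with Some l' => l' | None => l end
  end.

Definition trun (w : list theta) (l : list nat) : list nat := fold_left tstep w l.

Definition cntn (j : nat) (l : list nat) : nat := length (filter (Nat.eqb j) l).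

Lemma tremove_app i T B : tremove i (T ++ B) =
  match tremove i T with Some T' => Some (T' ++ B)
  | None => match tremove i B with Some B' => Some (T ++ B') | None => None end end.
Proof.
  induction T as [|t T IH]; simpl.
  - destruct (tremove i B); auto.
  - destruct (Nat.eqb t i); auto. rewrite IH.
    destruct (tremove i T); auto. destruct (tremove i B); auto.
Qed.

Lemma tcons_app c T B : tcons c (T ++ B) =
  match tcons c T with Some T' => Some (T' ++ B)
  | None => match tcons c B with Some B' => Some (T ++ B') | None => None end end.
Proof.
  destruct c; simpl; auto.
  - apply tremove_app.
  - destruct T; simpl; auto. destruct B; auto.
Qed.

Lemma tremove_some i l l' : tremove i l = Some l' ->
  length l = S (length l') /\ cntn i l = S (cntn i l') /\ (forall j, cntn j l' <= cntn j l)
  /\ incl l' l.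
Proof.
  unfold cntn. revert l'; induction l as [|t l IH]; intros l' H; simpl in H; [discriminate|].
  destruct (Nat.eqb_spec t i).
  - inversion H; subst. simpl. rewrite Nat.eqb_refl. simpl. repeat split; auto.
    intros j. destruct (Nat.eqb j i); simpl; lia. intros x Hx; simpl; auto.
  - destruct (tremove i l) eqn:E; [|discriminate]. inversion H; subst.
    destruct (IH _ eq_refl) as (H1 & H2 & H3 & H4). simpl.
    destruct (Nat.eqb_spec i t); [congruence|]. repeat split; auto; try lia.
    intros j. destruct (Nat.eqb j t); simpl; specialize (H3 j); lia.
    intros x [Hx|Hx]; simpl; auto.
Qed.

Lemma tremove_none i l : tremove i l = None -> cntn i l = 0.
Proof.
  unfold cntn. induction l as [|t l IH]; simpl; auto.
  destruct (Nat.eqb_spec t i); [discriminate|].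
  destruct (tremove i l); [discriminate|]. intros _.
  destruct (Nat.eqb_spec i t); [congruence|]. auto.
Qed.

Lemma tcons_some c l l' : tcons c l = Some l' ->
  length l = S (length l') /\ (forall j, cntn j l' <= cntn j l /\ cntn j l <= S (cntn j l')) /\ incl l' l.
Proof.
  destruct c; simpl; intros H; [discriminate| |].
  - destruct (tremove_some _ _ _ H) as (H1 & H2 & H3 & H4). repeat split; auto.
    unfold cntn in *.
    (* cnt j decreases by at most one: length decreases by one *)
    assert (length (filter (Nat.eqb j) l) <= length (filter (Nat.eqb j) l') + (length l - length l')).
    { clear -H. revert l' H. induction l as [|t l IH]; intros l' H; simpl in H; [discriminate|].
      destruct (Nat.eqb_spec t n).
      - inversion H; subst l'. cbn [filter length]. destruct (Nat.eqb j t); cbn [length]; lia.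
      - destruct (tremove n l) eqn:E; [|discriminate]. inversion H; subst.
        specialize (IH _ eq_refl). cbn [filter length]. destruct (Nat.eqb j t); cbn [length]; lia. }
    specialize (H3 j). unfold cntn in H3. lia.
  - destruct l; [discriminate|]. inversion H; subst. simpl. repeat split; auto.
    unfold cntn; simpl; destruct (Nat.eqb j n); simpl; lia.
    unfold cntn; simpl; destruct (Nat.eqb j n); simpl; lia.
    intros x Hx; simpl; auto.
Qed.

Definition Bnext (T B : list nat) (c : theta) : list nat :=
  match c with
  | Burger _ => B
  | _ => match tcons c T with
         | Some _ => B
         | None => match tcons c B with Some B' => B' | None => B end
         end
  end.

Lemma tstep_app T B c : tstep (T ++ B) c = tstep T c ++ Bnext T B c.
Proof.
  unfold tstep, Bnext. destruct c; auto; rewrite tcons_app;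
  destruct (tcons _ T); auto; destruct (tcons _ B); auto.
Qed.

Fixpoint Bfin (w : list theta) (T B : list nat) : list nat :=
  match w with
  | [] => B
  | c :: w' => Bfin w' (tstep T c) (Bnext T B c)
  end.

Lemma trun_app_stack w T B : trun w (T ++ B) = trun w T ++ Bfin w T B.
Proof.
  revert T B; induction w as [|c w IH]; intros T B; simpl; auto.
  unfold trun in *. simpl. rewrite tstep_app. apply IH.
Qed.

Lemma Bnext_len T B c : length (Bnext T B c) <= length B /\ length B <= S (length (Bnext T B c))
  /\ (forall j, cntn j B <= cntn j (Bnext T B c) + (length B - length (Bnext T B c))).
Proof.
  unfold Bnext. destruct c; try (repeat split; lia);
  destruct (tcons _ T); try (repeat split; lia);
  destruct (tcons _ B) eqn:E; try (repeat split; lia);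
  destruct (tcons_some _ _ _ E) as (H1 & H2 & _); repeat split; try lia;
  intros j; specialize (H2 j); lia.
Qed.

Fixpoint cnt (P : list nat -> theta -> bool) (w : list theta) (T : list nat) : nat :=
  match w with
  | [] => 0
  | c :: w' => (if P T c then 1 else 0) + cnt P w' (tstep T c)
  end.

Definition Pf (T : list nat) (c : theta) : bool :=
  match c with Flex => match T with [] => true | _ => false end | _ => false end.
Definition Po (j : nat) (T : list nat) (c : theta) : bool :=
  match c with Order i => Nat.eqb i j && match tremove i T with None => true | _ => false end | _ => false end.
Definition Pv (T : list nat) (c : theta) : bool :=
  match c with Burger _ => false | _ => match tcons c T with None => true | _ => false end end.

Lemma Bfin_len w T B : length (Bfin w T B) <= length B.
Proof.
  revert T B; induction w as [|c w IH]; intros T B; simpl; auto.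
  pose proof (Bnext_len T B c). specialize (IH (tstep T c) (Bnext T B c)). lia.
Qed.

Lemma cross_F w T B : length (Bfin w T B) + Nat.min (length B) (cnt Pf w T) <= length B.
Proof.
  revert T B; induction w as [|c w IH]; intros T B; simpl; [lia|].
  destruct (Pf T c) eqn:EP.
  - destruct c; simpl in EP; try discriminate. destruct T; try discriminate.
    simpl. destruct B as [|b B].
    + simpl. pose proof (Bfin_len w [] []). simpl in *. lia.
    + simpl. specialize (IH [] B). simpl in IH. lia.
  - pose proof (Bnext_len T B c) as (H1 & H2 & _). specialize (IH (tstep T c) (Bnext T B c)). lia.
Qed.

Lemma cross_O j w T B : length (Bfin w T B) + Nat.min (cntn j B) (cnt (Po j) w T) <= length B.
Proof.
  revert T B; induction w as [|c w IH]; intros T B; simpl.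
  - unfold cntn. pose proof (filter_length_le (Nat.eqb j) B). lia.
  - destruct (Po j T c) eqn:EP.
    + destruct c; simpl in EP; try discriminate.
      destruct (Nat.eqb_spec n j); simpl in EP; try discriminate. subst n.
      destruct (tremove j T) eqn:ET; try discriminate.
      unfold Bnext. simpl. rewrite ET.
      destruct (tremove j B) eqn:EB.
      * destruct (tremove_some _ _ _ EB) as (H1 & H2 & _).
        specialize (IH T l). lia.
      * rewrite (tremove_none _ _ EB). pose proof (Bfin_len w T B). lia.
    + pose proof (Bnext_len T B c) as (H1 & H2 & H3). specialize (H3 j).
      specialize (IH (tstep T c) (Bnext T B c)). lia.
Qed.


Open Scope nat_scope.

Definition U w := length (trun w []).
Definition Fc w := cnt Pf w [].
Definition Oc j w := cnt (Po j) w [].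
Definition Vc w := cnt Pv w [].
Definition Bj j w := cntn j (trun w []).
Definition su w := U w - U (tl w).
Definition vu w := if Pv (trun (removelast w) []) (last w Flex) then 1 else 0.

Fixpoint sumk (k : nat) (f : nat -> nat) : nat :=
  match k with 0 => 0 | S k' => sumk k' f + f k' end.

Lemma sumk_plus k f g : sumk k (fun j => f j + g j) = sumk k f + sumk k g.
Proof. induction k; simpl; lia. Qed.

Lemma sumk_ge k f i : i < k -> f i <= sumk k f.
Proof. induction k; simpl; intros H; [lia|]. destruct (Nat.eq_dec i k); [subst; lia|].
  specialize (IHk ltac:(lia)); lia. Qed.

Lemma sumk_ind k x : x < k -> sumk k (fun j => if Nat.eqb j x then 1 else 0) = 1.
Proof.
  induction k; simpl; intros H; [lia|]. destruct (Nat.eqb_spec k x).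
  - subst. assert (sumk x (fun j => if Nat.eqb j x then 1 else 0) = 0).
    { clear. assert (forall m, m <= x -> sumk m (fun j => if Nat.eqb j x then 1 else 0) = 0).
      { induction m; simpl; intros; auto. destruct (Nat.eqb_spec m x); [lia|]. rewrite IHm; lia. }
      apply H; lia. }
    lia.
  - rewrite IHk; lia.
Qed.

Lemma trun_cons c w T : trun (c :: w) T = trun w (tstep T c).
Proof. reflexivity. Qed.

Lemma U_cons c w : U (c :: w) = U w + su (c :: w) /\ su (c :: w) <= 1.
Proof.
  unfold su, U. simpl tl. rewrite trun_cons.
  destruct c.
  - simpl tstep. replace [n] with ([] ++ [n]) by reflexivity. rewrite trun_app_stack.
    rewrite length_app. pose proof (Bfin_len w [] [n]). simpl in H. lia.
  - simpl. lia.
  - simpl. lia.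
Qed.

Lemma U_app u v : U (u ++ v) + Nat.min (U u) (Fc v) <= U u + U v
  /\ (forall j, U (u ++ v) + Nat.min (Bj j u) (Oc j v) <= U u + U v)
  /\ U (u ++ v) <= U u + U v.
Proof.
  assert (E: trun (u ++ v) [] = trun v [] ++ Bfin v [] (trun u [])).
  { unfold trun at 1. rewrite fold_left_app.
    change (fold_left tstep v (fold_left tstep u [])) with (trun v ([] ++ trun u [])).
    apply trun_app_stack. }
  unfold U, Fc, Oc, Bj. rewrite E, length_app.
  pose proof (cross_F v [] (trun u [])). pose proof (Bfin_len v [] (trun u [])).
  repeat split; try lia. intros j. pose proof (cross_O j v [] (trun u [])). lia.
Qed.

Lemma cnt_snoc P w c T : cnt P (w ++ [c]) T = cnt P w T + (if P (trun w T) c then 1 else 0).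
Proof.
  revert T; induction w as [|d w IH]; intros T; simpl; [lia|]. rewrite IH. unfold trun. simpl. lia.
Qed.

Lemma Vc_snoc w c : Vc (w ++ [c]) = Vc w + vu (w ++ [c]).
Proof. unfold Vc, vu. rewrite cnt_snoc, removelast_last, last_last. auto. Qed.

Definition isB (c : theta) : nat := match c with Burger _ => 1 | _ => 0 end.
Definition nb (w : list theta) : nat := fold_right (fun c a => isB c + a) 0 w.
Definition no (w : list theta) : nat := fold_right (fun c a => (1 - isB c) + a) 0 w.

Lemma conservation w T : length (trun w T) + no w = length T + nb w + cnt Pv w T.
Proof.
  revert T; induction w as [|c w IH]; intros T; [simpl; lia|].
  rewrite trun_cons. simpl cnt. simpl no. simpl nb. specialize (IH (tstep T c)).
  destruct c.
  - simpl in *; lia.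
  - simpl Pv; simpl isB; unfold tstep in *.
    destruct (tcons _ T) eqn:E; [destruct (tcons_some _ _ _ E) as (H1 & _)|]; simpl in *; try rewrite E; lia.
  - simpl Pv; simpl isB; unfold tstep in *.
    destruct (tcons _ T) eqn:E; [destruct (tcons_some _ _ _ E) as (H1 & _)|]; simpl in *; try rewrite E; lia.
Qed.

Lemma U_V w : U w + no w = nb w + Vc w.
Proof. pose proof (conservation w []). unfold U, Vc. simpl in H. lia. Qed.

Lemma in_Sig_B k i : In (Burger i) (Sig k) -> i < k.
Proof. unfold Sig. rewrite !in_app_iff, !in_map_iff. intros [(x & H1 & H2)|[(x & H1 & H2)|[H|[]]]];
  try discriminate. inversion H1; subst. apply in_seq in H2; lia. Qed.
Lemma in_Sig_O k i : In (Order i) (Sig k) -> i < k.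
Proof. unfold Sig. rewrite !in_app_iff, !in_map_iff. intros [(x & H1 & H2)|[(x & H1 & H2)|[H|[]]]];
  try discriminate. inversion H1; subst. apply in_seq in H2; lia. Qed.

Lemma V_le k w T : valid k w -> cnt Pv w T <= cnt Pf w T + sumk k (fun j => cnt (Po j) w T).
Proof.
  revert T; induction w as [|c w IH]; intros T Hv; simpl; [lia|].
  inversion Hv; subst. specialize (IH (tstep T c) H2).
  rewrite sumk_plus.
  assert ((if Pv T c then 1 else 0) <= (if Pf T c then 1 else 0) + sumk k (fun j => if Po j T c then 1 else 0)).
  { destruct c; simpl; try lia.
    - apply in_Sig_O in H1.
      pose proof (sumk_ge k (fun j => if (Nat.eqb n j && match tremove n T with None => true | _ => false end)%bool then 1 else 0) n H1).
      simpl in H. rewrite Nat.eqb_refl in H. simpl in H. destruct (tremove n T); lia.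
    - destruct T; lia. }
  lia.
Qed.

Lemma cnt_le P w T : cnt P w T <= length w.
Proof. revert T; induction w; intros T; simpl; [lia|]. specialize (IHw (tstep T a)). destruct (P T a); lia. Qed.

Lemma U_le w : U w <= length w.
Proof.
  assert (forall T, length (trun w T) <= length T + length w).
  { induction w as [|c w IH]; intros T; [simpl; lia|]. rewrite trun_cons. specialize (IH (tstep T c)).
    simpl length. unfold tstep in *. destruct c; [simpl in *; lia| |];
    [destruct (tcons (Order n) T) eqn:E|destruct (tcons Flex T) eqn:E]; try lia;
    destruct (tcons_some _ _ _ E) as (H1 & _); lia. }
  apply H. Qed.

Lemma Bj_le j w : Bj j w <= U w.
Proof. unfold Bj, U, cntn. apply filter_length_le. Qed.

Lemma trun_lt k w T : valid k w -> (forall x, In x T -> x < k) -> forall x, In x (trun w T) -> x < k.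
Proof.
  revert T; induction w as [|c w IH]; intros T Hv HT; simpl; auto.
  inversion Hv; subst. unfold trun. simpl. apply IH; auto.
  intros x Hx. unfold tstep in Hx. destruct c.
  - destruct Hx; [subst; apply in_Sig_B; auto|auto].
  - destruct (tcons _ T) eqn:E; auto. destruct (tcons_some _ _ _ E) as (_ & _ & H3); auto.
  - destruct (tcons _ T) eqn:E; auto. destruct (tcons_some _ _ _ E) as (_ & _ & H3); auto.
Qed.

Lemma len_sumk k l : (forall x, In x l -> x < k) -> length l = sumk k (fun j => cntn j l).
Proof.
  induction l as [|x l IH]; intros H; simpl.
  - clear. induction k; simpl; auto. rewrite <- IHk. reflexivity.
  - unfold cntn in *. simpl.
        assert (sumk k (fun j => length (if Nat.eqb j x then x :: filter (Nat.eqb j) l else filter (Nat.eqb j) l))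
            = sumk k (fun j => (if Nat.eqb j x then 1 else 0) + length (filter (Nat.eqb j) l))).
    { clear. induction k; simpl; auto. rewrite IHk. destruct (Nat.eqb k x); simpl; lia. }
    rewrite H0, sumk_plus, sumk_ind by (apply H; simpl; auto).
    rewrite <- IH; auto. intros; apply H; simpl; auto.
Qed.

Lemma U_sum k w : valid k w -> U w = sumk k (fun j => Bj j w).
Proof. intros Hv. unfold U, Bj. apply len_sumk. apply trun_lt; auto. intros _ []. Qed.


Open Scope R_scope.

Lemma Ew_cons k p n (a : theta -> R) f : (1 <= k)%nat ->
  Ew k p (S n) (fun w => a (hd Flex w) + f (tl w)) = lsum (fun c => law k p c * a c) (Sig k) + Ew k p n f.
Proof.
  intros Hk. simpl.
  rewrite (lsum_ext_in _ (fun c => law k p c * a c + Ew k p n f * law k p c)).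
  - rewrite lsum_plus, lsum_scal, law_sum; auto. lra.
  - intros c _. rewrite Ew_plus, Ew_const; auto. lra.
Qed.

Lemma E_nb_no k p n : (1 <= k)%nat ->
  Ew k p n (fun w => INR (nb w)) = Ew k p n (fun w => INR (no w)).
Proof.
  intros Hk. assert (0 < INR k) by (apply lt_0_INR; lia).
  induction n; [simpl; auto|].
  rewrite (Ew_ext _ _ _ _ (fun w => INR (isB (hd Flex w)) + INR (nb (tl w)))).
  2:{ intros w Hl _. destruct w; simpl in Hl; [lia|]. simpl. rewrite plus_INR. auto. }
  rewrite (Ew_ext _ _ _ (fun w => INR (no w)) (fun w => INR (1 - isB (hd Flex w)) + INR (no (tl w)))).
  2:{ intros w Hl _. destruct w; simpl in Hl; [lia|]. simpl. rewrite plus_INR. auto. }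
  rewrite (Ew_cons k p n (fun c => INR (isB c)) (fun w => INR (nb w))), (Ew_cons k p n (fun c => INR (1 - isB c)) (fun w => INR (no w))), IHn; auto. f_equal. rewrite !lsum_Sig. simpl.
  rewrite (lsum_ext_in (fun i => law k p (Burger i) * 1) (fun _ => / (2 * INR k))).
  2:{ intros x Hx. apply in_seq in Hx. simpl. destruct (Nat.ltb_spec x k); [lra|lia]. }
  rewrite (lsum_ext_in (fun i => law k p (Order i) * 0) (fun _ => 0)) by (intros; lra).
  rewrite (lsum_ext_in (fun i => law k p (Burger i) * 0) (fun _ => 0)) by (intros; lra).
  rewrite (lsum_ext_in (fun i => law k p (Order i) * 1) (fun _ => (1 - p) / (2 * INR k))).
  2:{ intros x Hx. apply in_seq in Hx. simpl. destruct (Nat.ltb_spec x k); [lra|lia]. }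
  rewrite !lsum_const_seq. field. lra.
Qed.

Definition RU w := INR (U w).
Definition RV w := INR (Vc w).

Lemma EU_EV k p n : (1 <= k)%nat -> Ew k p n RU = Ew k p n RV.
Proof.
  intros Hk.
  assert (Ew k p n (fun w => RU w + INR (no w)) = Ew k p n (fun w => RV w + INR (nb w))).
  { apply Ew_ext. intros w _ _. unfold RU, RV. rewrite <- !plus_INR. f_equal. pose proof (U_V w). lia. }
  rewrite !Ew_plus, E_nb_no in H; auto. lra.
Qed.

Lemma DU_step k p n : (1 <= k)%nat ->
  Ew k p (S n) RU = Ew k p n RU + Ew k p (S n) (fun w => INR (su w)).
Proof.
  intros Hk. rewrite <- (Ew_skipn k p 1 n RU Hk). simpl plus. rewrite <- Ew_plus.
  apply Ew_ext. intros w Hl _. destruct w; simpl in Hl; [lia|]. unfold RU.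
  rewrite <- plus_INR. f_equal. simpl skipn. apply U_cons.
Qed.

Lemma DV_step k p n : (1 <= k)%nat ->
  Ew k p (S n) RV = Ew k p n RV + Ew k p (S n) (fun w => INR (vu w)).
Proof.
  intros Hk. rewrite <- (Ew_firstn k p n 1 RV Hk). rewrite Nat.add_1_r. rewrite <- Ew_plus.
  apply Ew_ext. intros w Hl _. unfold RV. rewrite <- plus_INR. f_equal.
  assert (w <> []) by (intro; subst; simpl in Hl; lia).
  rewrite (@app_removelast_last theta w Flex H) at 1 3. rewrite Vc_snoc.
  rewrite removelast_firstn_len, Hl. simpl. auto.
Qed.

Definition sw (a b i : nat) : nat := if Nat.eqb i a then b else if Nat.eqb i b then a else i.

Lemma sw_inv a b i : sw a b (sw a b i) = i.
Proof. unfold sw. destruct (Nat.eqb_spec i a); subst.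
  - destruct (Nat.eqb_spec b a); subst; [auto|]. rewrite Nat.eqb_refl. auto.
  - destruct (Nat.eqb_spec i b); subst.
    + rewrite Nat.eqb_refl. auto.
    + destruct (Nat.eqb_spec i a); [congruence|]. destruct (Nat.eqb_spec i b); [congruence|auto].
Qed.

Lemma sw_inj a b x y : sw a b x = sw a b y -> x = y.
Proof. intros H. rewrite <- (sw_inv a b x), <- (sw_inv a b y), H. auto. Qed.

Lemma sw_eqb a b x y : Nat.eqb (sw a b x) (sw a b y) = Nat.eqb x y.
Proof. destruct (Nat.eqb_spec x y); subst. apply Nat.eqb_refl.
  apply Nat.eqb_neq. intro H. apply n. eapply sw_inj; eauto. Qed.

Definition relc (a b : nat) (c : theta) : theta :=
  match c with Burger i => Burger (sw a b i) | Order i => Order (sw a b i) | Flex => Flex end.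

Lemma tremove_sw a b i T : tremove (sw a b i) (map (sw a b) T) = option_map (map (sw a b)) (tremove i T).
Proof. induction T as [|t T IH]; simpl; auto. rewrite sw_eqb. destruct (Nat.eqb t i); auto.
  rewrite IH. destruct (tremove i T); auto. Qed.

Lemma tcons_sw a b c T : tcons (relc a b c) (map (sw a b) T) = option_map (map (sw a b)) (tcons c T).
Proof. destruct c; simpl; auto. apply tremove_sw. destruct T; auto. Qed.

Lemma tstep_sw a b c T : tstep (map (sw a b) T) (relc a b c) = map (sw a b) (tstep T c).
Proof.
  destruct c; simpl; auto.
  - rewrite tremove_sw. destruct (tremove n T); simpl; auto.
  - destruct T; simpl; auto.
Qed.

Lemma trun_sw a b w T : trun (map (relc a b) w) (map (sw a b) T) = map (sw a b) (trun w T).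
Proof. revert T; induction w as [|c w IH]; intros T; [reflexivity|].
  change (map (relc a b) (c :: w)) with (relc a b c :: map (relc a b) w).
  rewrite !trun_cons, tstep_sw. apply IH. Qed.

Lemma cntn_sw a b j l : cntn (sw a b j) (map (sw a b) l) = cntn j l.
Proof. unfold cntn. induction l as [|x l IH]; simpl; auto. rewrite sw_eqb.
  destruct (Nat.eqb j x); simpl; auto. Qed.

Lemma law_sw k p a b c : (a < k)%nat -> (b < k)%nat -> law k p (relc a b c) = law k p c.
Proof.
  intros Ha Hb. assert (E: forall i, Nat.ltb (sw a b i) k = Nat.ltb i k).
  { intros i. unfold sw. destruct (Nat.eqb_spec i a); subst.
    - destruct (Nat.ltb_spec b k), (Nat.ltb_spec a k); auto; lia.
    - destruct (Nat.eqb_spec i b); subst; auto.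
      destruct (Nat.ltb_spec b k), (Nat.ltb_spec a k); auto; lia. }
  destruct c; simpl; rewrite ?E; auto.
Qed.

Lemma lsum_seq_sw a b k (g : nat -> R) : (a < k)%nat -> (b < k)%nat ->
  lsum (fun i => g (sw a b i)) (seq 0 k) = lsum g (seq 0 k).
Proof.
  intros Ha Hb. rewrite <- (lsum_map g (sw a b)). apply lsum_perm.
  apply Permutation_map_same_l.
  - apply Injective_map_NoDup; [intros x y; apply sw_inj|apply seq_NoDup].
  - intros x Hx. apply in_map_iff in Hx as (y & <- & Hy). apply in_seq in Hy. apply in_seq.
    unfold sw. destruct (Nat.eqb_spec y a); [lia|]. destruct (Nat.eqb_spec y b); lia.
Qed.

Lemma lsum_Sig_sw k a b (h : theta -> R) : (a < k)%nat -> (b < k)%nat ->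
  lsum (fun c => h (relc a b c)) (Sig k) = lsum h (Sig k).
Proof.
  intros Ha Hb. rewrite !lsum_Sig. simpl.
  rewrite (lsum_seq_sw a b k (fun i => h (Burger i))), (lsum_seq_sw a b k (fun i => h (Order i))); auto.
Qed.

Lemma Ew_sw k p a b n f : (a < k)%nat -> (b < k)%nat ->
  Ew k p n (fun w => f (map (relc a b) w)) = Ew k p n f.
Proof.
  intros Ha Hb. revert f; induction n; intros f; simpl; auto.
  rewrite (lsum_ext_in _ (fun c => law k p (relc a b c) * Ew k p n (fun w => f (relc a b c :: w)))).
  - apply (lsum_Sig_sw k a b (fun c => law k p c * Ew k p n (fun w => f (c :: w)))); auto.
  - intros c _. rewrite law_sw; auto. f_equal. apply (IHn (fun w => f (relc a b c :: w))).
Qed.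

Lemma E_Bj_sym k p n j : (j < k)%nat ->
  Ew k p n (fun w => INR (Bj j w)) = Ew k p n (fun w => INR (Bj 0 w)).
Proof.
  intros Hj. rewrite <- (Ew_sw k p 0 j n (fun w => INR (Bj j w))); [|lia|auto].
  apply Ew_ext. intros w _ _. unfold Bj. f_equal.
  replace (@nil nat) with (map (sw 0 j) []) by reflexivity. rewrite trun_sw.
  replace j with (sw 0 j 0) at 1 by (unfold sw; simpl; auto). apply cntn_sw.
Qed.


Open Scope R_scope.

Definition ind (th : R) (f : list theta -> R) (w : list theta) : R :=
  if Rle_dec th (f w) then 1 else 0.

Lemma ind_01 th f w : 0 <= ind th f w <= 1.
Proof. unfold ind. destruct (Rle_dec th (f w)); lra. Qed.

Lemma nat_big (x : R) : exists n : nat, x < INR n.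
Proof.
  destruct (archimed x) as [H1 _].
  destruct (Z_lt_le_dec (up x) 0).
  - exists 0%nat. simpl. assert (IZR (up x) <= -1) by (apply IZR_le; lia). lra.
  - exists (Z.to_nat (up x)). rewrite INR_IZR_INZ, Z2Nat.id; auto.
Qed.

Lemma PZ k p N f a : (1 <= k)%nat -> 0 <= p <= 1 -> (1 <= N)%nat -> 0 <= a ->
  (forall w, length w = N -> valid k w -> 0 <= f w <= INR N) ->
  a <= Ew k p N f -> a / (2 * INR N) <= Ew k p N (ind (a / 2) f).
Proof.
  intros Hk Hp HN Ha Hf HE.
  assert (HNp : 0 < INR N) by (apply lt_0_INR; lia).
  assert (Ew k p N f <= Ew k p N (fun w => a / 2 + INR N * ind (a/2) f w)).
  { apply Ew_le; auto. intros w Hl Hv. specialize (Hf w Hl Hv). unfold ind.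
    destruct (Rle_dec (a/2) (f w)); lra. }
  rewrite Ew_plus, Ew_const, Ew_scal in H; auto.
  set (E := Ew k p N (ind (a / 2) f)) in *.
  apply (Rmult_le_reg_l (2 * INR N)); [lra|]. field_simplify; [|lra]. lra.
Qed.

Fixpoint rsumk (k : nat) (f : nat -> R) : R :=
  match k with O => 0 | S k' => rsumk k' f + f k' end.

Lemma Ew_sumk k p n K (g : nat -> list theta -> nat) :
  Ew k p n (fun w => INR (sumk K (fun j => g j w))) = rsumk K (fun j => Ew k p n (fun w => INR (g j w))).
Proof.
  induction K; simpl.
  - revert n. clear. induction n; simpl; auto.
    rewrite (lsum_ext_in _ (fun c => 0 * law k p c)). rewrite lsum_scal; lra.
    intros c _. rewrite IHn. lra.
  - rewrite <- IHK, <- Ew_plus. apply Ew_ext. intros. apply plus_INR.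
Qed.

Lemma rsumk_lt K (a : nat -> R) b : (forall j, (j < S K)%nat -> a j < b) -> rsumk (S K) a < INR (S K) * b.
Proof.
  induction K; intros H.
  - simpl. specialize (H 0%nat ltac:(lia)). lra.
  - change (rsumk (S (S K)) a) with (rsumk (S K) a + a (S K)).
    rewrite (S_INR (S K)). specialize (IHK (fun j Hj => H j ltac:(lia))). specialize (H (S K) ltac:(lia)). lra.
Qed.

Lemma pigeon K (a : nat -> R) S0 : (1 <= K)%nat -> S0 <= rsumk K a -> exists j, (j < K)%nat /\ S0 / INR K <= a j.
Proof.
  intros HK HS. destruct K; [lia|].
  apply NNPP. intros Hn.
  assert (forall j, (j < S K)%nat -> a j < S0 / INR (S K)).
  { intros j Hj. apply Rnot_le_lt. intro. apply Hn. exists j; auto. }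
  pose proof (rsumk_lt K a _ H). assert (0 < INR (S K)) by (apply lt_0_INR; lia).
  replace (INR (S K) * (S0 / INR (S K))) with S0 in H0 by (field; lra). lra.
Qed.

Lemma rsumk_const K c : rsumk K (fun _ => c) = INR K * c.
Proof. induction K; simpl rsumk; [simpl; lra|]. rewrite IHK, S_INR. lra. Qed.

Definition RF w := INR (Fc w).
Definition ROc j w := INR (Oc j w).
Definition RBj j w := INR (Bj j w).
Definition Mx (N : nat) (w : list theta) : R := RU (firstn N w) + RU (skipn N w) - RU w.

Lemma min_ge (a b : nat) (t : R) : t <= INR a -> t <= INR b -> t <= INR (Nat.min a b).
Proof. intros. destruct (Nat.min_spec a b) as [[_ ->]|[_ ->]]; auto. Qed.

Lemma EMx k p N : (1 <= k)%nat -> Ew k p (N + N) (Mx N) = 2 * Ew k p N RU - Ew k p (N + N) RU.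
Proof.
  intros Hk. unfold Mx.
  rewrite (Ew_ext _ _ _ _ (fun w => (RU (firstn N w) + RU (skipn N w)) + (-1) * RU w)) by (intros; lra).
  rewrite !Ew_plus, Ew_scal, (Ew_firstn k p N N RU), (Ew_skipn k p N N RU); auto. lra.
Qed.

Lemma Mx_lower k p N th th1 th2 (f1 f2 : list theta -> R) :
  (1 <= k)%nat -> 0 <= p <= 1 -> 0 <= th -> th <= th1 -> th <= th2 ->
  (forall u v, th1 <= f1 u -> th2 <= f2 v -> th <= RU u + RU v - RU (u ++ v)) ->
  th * Ew k p N (ind th1 f1) * Ew k p N (ind th2 f2) <= Ew k p (N + N) (Mx N).
Proof.
  intros Hk Hp Hth H1 H2 Hc.
  rewrite Rmult_assoc, <- (Ew_prod k p N N (ind th1 f1) (ind th2 f2) Hk), <- Ew_scal.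
  apply Ew_le; auto. intros w Hl _. unfold Mx.
  pose proof (firstn_skipn N w) as E. set (u := firstn N w) in *. set (v := skipn N w) in *.
  rewrite <- E. pose proof (proj2 (proj2 (U_app u v))) as HU.
  unfold ind. destruct (Rle_dec th1 (f1 u)), (Rle_dec th2 (f2 v)).
  - specialize (Hc u v r r0). lra.
  - unfold RU. apply le_INR in HU. rewrite plus_INR in HU. lra.
  - unfold RU. apply le_INR in HU. rewrite plus_INR in HU. lra.
  - unfold RU. apply le_INR in HU. rewrite plus_INR in HU. lra.
Qed.


Open Scope R_scope.

Lemma prod3 a b c a' b' c' : 0 <= a' -> a' <= a -> 0 <= b' -> b' <= b -> 0 <= c' -> c' <= c ->
  a' * b' * c' <= a * b * c.
Proof. intros. apply Rmult_le_compat; try apply Rmult_le_pos; auto; try lra.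
  apply Rmult_le_compat; lra. Qed.

Lemma rsumk_ext K f g : (forall j, (j < K)%nat -> f j = g j) -> rsumk K f = rsumk K g.
Proof. induction K; intros H; simpl; auto. rewrite IHK by (intros; apply H; lia). rewrite H by lia. auto. Qed.

Lemma cross_bound k p N eps : (1 <= k)%nat -> 0 <= p <= 1 -> (1 <= N)%nat -> 0 < eps ->
  eps * INR N <= Ew k p N RU ->
  eps ^ 3 / (32 * INR k ^ 3) * INR N <= Ew k p (N + N) (Mx N).
Proof.
  intros Hk Hp HN He HD.
  assert (HK : 1 <= INR k) by (apply (le_INR 1); auto).
  assert (HNp : 1 <= INR N) by (apply (le_INR 1); auto).
  assert (HK3 : 1 <= INR k ^ 3).
  { replace 1 with (1 ^ 3) by ring. apply pow_incr. lra. }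
  set (K := INR k) in *. set (NN := INR N) in *.
  assert (Hpos : 0 < eps * NN) by (apply Rmult_lt_0_compat; lra).
  assert (HV : Ew k p N RU <= Ew k p N RF + rsumk k (fun j => Ew k p N (ROc j))).
  { rewrite EU_EV; auto. unfold ROc. rewrite <- Ew_sumk, <- Ew_plus. apply Ew_le; auto.
    intros w _ Hv. unfold RV, RF. rewrite <- plus_INR. apply le_INR. apply V_le; auto. }
  assert (Hbnd : forall (g : list theta -> nat), (forall w, (g w <= length w)%nat) ->
            forall w, length w = N -> valid k w -> 0 <= INR (g w) <= INR N).
  { intros g Hg w Hl _. split; [apply pos_INR|]. apply le_INR. rewrite <- Hl. auto. }
  destruct (Rle_dec (eps * NN / 2) (Ew k p N RF)) as [HA|HA].
  -
    pose proof (PZ k p N RF (eps * NN / 2) Hk Hp HN ltac:(lra)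
                   (Hbnd Fc (fun w => cnt_le Pf w [])) HA) as E2.
    pose proof (PZ k p N RU (eps * NN) Hk Hp HN ltac:(lra)
                   (Hbnd U U_le) HD) as E1.
    pose proof (Mx_lower k p N (eps * NN / 2 / 2) (eps * NN / 2) (eps * NN / 2 / 2) RU RF
                  Hk Hp ltac:(lra) ltac:(lra) ltac:(lra)) as HM.
    assert (Hc : forall u v, eps * NN / 2 <= RU u -> eps * NN / 2 / 2 <= RF v ->
              eps * NN / 2 / 2 <= RU u + RU v - RU (u ++ v)).
    { intros u v H1 H2. pose proof (proj1 (U_app u v)) as HU. apply le_INR in HU.
      rewrite !plus_INR in HU. pose proof (min_ge (U u) (Fc v) (eps * NN / 2 / 2) ltac:(unfold RU in *; lra) H2).
      unfold RU. lra. }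
    specialize (HM Hc).
    apply Rle_trans with ((eps * NN / 2 / 2) * (eps * NN / (2 * NN)) * (eps * NN / 2 / (2 * NN))).
    { replace ((eps * NN / 2 / 2) * (eps * NN / (2 * NN)) * (eps * NN / 2 / (2 * NN)))
        with (eps ^ 3 / 32 * NN) by (field; lra).
      apply Rmult_le_compat_r; [lra|]. unfold Rdiv. apply Rmult_le_compat_l; [apply pow_le; lra|].
      apply Rinv_le_contravar; lra. }
    eapply Rle_trans; [|exact HM].
    apply prod3; try lra; try assumption.
    + apply Rle_mult_inv_pos; lra.
    + apply Rle_mult_inv_pos; lra.
  -
    assert (HS : eps * NN / 2 <= rsumk k (fun j => Ew k p N (ROc j))) by lra.
    destruct (pigeon k _ _ Hk HS) as (j & Hj & HO).
    fold K in HO.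
    assert (HB : eps * NN / K <= Ew k p N (RBj j)).
    { assert (Ew k p N RU = K * Ew k p N (RBj 0)).
      { rewrite (Ew_ext _ _ _ RU (fun w => INR (sumk k (fun j => Bj j w)))).
        2:{ intros w _ Hv. unfold RU. f_equal. apply U_sum; auto. }
        rewrite Ew_sumk. unfold RBj.
        transitivity (rsumk k (fun _ => Ew k p N (fun w => INR (Bj 0 w)))).
        - apply rsumk_ext. intros j0 Hj0. apply E_Bj_sym; auto.
        - rewrite rsumk_const. auto. }
      unfold RBj. rewrite E_Bj_sym by auto. fold (RBj 0). rewrite H in HD.
      apply (Rmult_le_reg_l K); [lra|]. replace (K * (eps * NN / K)) with (eps * NN) by (field; lra). lra. }
    assert (HKp : 0 < K) by lra.
    assert (Ha : 0 <= eps * NN / 2 / K) by (apply Rle_mult_inv_pos; lra).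
    assert (Ha' : 0 <= eps * NN / K) by (apply Rle_mult_inv_pos; lra).
    pose proof (PZ k p N (ROc j) (eps * NN / 2 / K) Hk Hp HN Ha
                   (Hbnd (Oc j) (fun w => cnt_le (Po j) w [])) HO) as E2.
    assert (HBle : forall w, (Bj j w <= length w)%nat) by (intros w; pose proof (Bj_le j w); pose proof (U_le w); lia).
    pose proof (PZ k p N (RBj j) (eps * NN / K) Hk Hp HN Ha' (Hbnd (Bj j) HBle) HB) as E1.
    assert (Hth : eps * NN / 2 / K / 2 <= eps * NN / K / 2).
    { replace (eps * NN / 2 / K / 2) with ((eps * NN / K / 2) / 2) by (field; lra). lra. }
    pose proof (Mx_lower k p N (eps * NN / 2 / K / 2) (eps * NN / K / 2) (eps * NN / 2 / K / 2) (RBj j) (ROc j)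
                  Hk Hp ltac:(lra) Hth ltac:(lra)) as HM.
    assert (Hc : forall u v, eps * NN / K / 2 <= RBj j u -> eps * NN / 2 / K / 2 <= ROc j v ->
              eps * NN / 2 / K / 2 <= RU u + RU v - RU (u ++ v)).
    { intros u v H1 H2. pose proof (proj1 (proj2 (U_app u v)) j) as HU. apply le_INR in HU.
      rewrite !plus_INR in HU. pose proof (min_ge (Bj j u) (Oc j v) (eps * NN / 2 / K / 2) ltac:(unfold RBj in *; lra) H2).
      unfold RU. lra. }
    specialize (HM Hc).
    apply Rle_trans with ((eps * NN / 2 / K / 2) * (eps * NN / K / (2 * NN)) * (eps * NN / 2 / K / (2 * NN))).
    { right. field. lra. }
    eapply Rle_trans; [|exact HM].
    apply prod3; try lra; try assumption.
    + apply Rle_mult_inv_pos; lra.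
    + apply Rle_mult_inv_pos; lra.
Qed.


Open Scope R_scope.

Lemma pow2_ge1 i : (1 <= 2 ^ i)%nat.
Proof. induction i; simpl; lia. Qed.

Lemma no_linear k p eps : (1 <= k)%nat -> 0 <= p <= 1 -> 0 < eps ->
  ~ (forall N, (1 <= N)%nat -> eps * INR N <= Ew k p N RU).
Proof.
  intros Hk Hp He Hall.
  assert (HK : 1 <= INR k) by (apply (le_INR 1); auto).
  set (kap := eps ^ 3 / (32 * INR k ^ 3)).
  assert (Hkap : 0 < kap).
  { unfold kap. apply Rdiv_lt_0_compat. apply pow_lt; lra.
    apply Rmult_lt_0_compat; [lra|apply pow_lt; lra]. }
  assert (STEP : forall N, (1 <= N)%nat -> Ew k p (N + N) RU <= 2 * Ew k p N RU - kap * INR N).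
  { intros N HN. pose proof (cross_bound k p N eps Hk Hp HN He (Hall N HN)).
    rewrite EMx in H; auto. unfold kap. lra. }
  assert (D1 : Ew k p 1 RU <= 1).
  { rewrite <- (Ew_const k p 1 1 Hk). apply Ew_le; auto. intros w Hl _. unfold RU.
    pose proof (U_le w). rewrite Hl in H. apply (le_INR _ 1) in H. simpl in H. lra. }
  assert (CL : forall i, Ew k p (2 ^ i) RU <= INR (2 ^ i) * (1 - INR i * kap / 2)).
  { induction i.
    - change (2 ^ 0)%nat with 1%nat. replace (INR 1 * (1 - INR 0 * kap / 2)) with 1 by (simpl; lra). exact D1.
    - replace (2 ^ S i)%nat with (2 ^ i + 2 ^ i)%nat by (simpl; lia).
      pose proof (STEP _ (pow2_ge1 i)). rewrite plus_INR, S_INR. nra. }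
  destruct (nat_big (2 / kap)) as [i Hi].
  specialize (CL i). specialize (Hall _ (pow2_ge1 i)).
  assert (H1 : 1 <= INR (2 ^ i)) by (apply (le_INR 1); apply pow2_ge1).
  assert (INR i * kap > 2).
  { apply (Rmult_lt_compat_r kap) in Hi; auto. unfold Rdiv in Hi.
    rewrite Rmult_assoc, Rinv_l in Hi; lra. }
  nra.
Qed.


Open Scope R_scope.

Lemma pred_ext {O : Type} (A B : O -> Prop) : (forall w, A w <-> B w) -> A = B.
Proof. intros H. apply functional_extensionality. intros w. apply propositional_extensionality. auto. Qed.

Lemma EC s l N0 c : infinite_sum s l -> (forall n, (n >= N0)%nat -> sum_f_R0 s n = c) -> l = c.
Proof.
  intros Hs Hc. apply NNPP. intros Hne.
  assert (He : Rabs (l - c) > 0) by (apply Rabs_pos_lt; lra).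
  destruct (Hs _ He) as [N HN]. specialize (HN (Nat.max N N0) ltac:(lia)).
  rewrite Hc in HN by lia. unfold Rdist in HN. rewrite Rabs_minus_sym in HN. lra.
Qed.


Lemma meas_False O meas P : is_probability_space O meas P -> meas (fun _ => False).
Proof. intros (HT & HC & _). replace (fun _ : O => False) with (fun w : O => ~ (fun _ => True) w).
  apply HC, HT. apply pred_ext. tauto. Qed.

Lemma meas_or O meas P A B : is_probability_space O meas P -> meas A -> meas B -> meas (fun w => A w \/ B w).
Proof.
  intros (HT & HC & HU & _) HA HB.
  replace (fun w => A w \/ B w) with (fun w => exists n : nat, (match n with O => A | _ => B end) w).
  - apply HU. intros [|n]; auto.
  - apply pred_ext. intros w. split. intros [[|n] H]; auto. intros [H|H]; [exists 0%nat|exists 1%nat]; auto.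
Qed.

Lemma meas_not O meas P A : is_probability_space O meas P -> meas A -> meas (fun w => ~ A w).
Proof. intros (HT & HC & _) HA. apply HC; auto. Qed.

Lemma meas_and O meas P A B : is_probability_space O meas P -> meas A -> meas B -> meas (fun w => A w /\ B w).
Proof.
  intros HP HA HB. replace (fun w => A w /\ B w) with (fun w => ~ (fun w => ~ A w \/ ~ B w) w).
  - apply meas_not with P; auto. apply meas_or with P; auto; apply meas_not with P; auto.
  - apply pred_ext. intros w. tauto.
Qed.

Lemma meas_ex_nat O meas P (E : nat -> O -> Prop) : is_probability_space O meas P ->
  (forall n, meas (E n)) -> meas (fun w => exists n, E n w).
Proof. intros (_ & _ & HU & _). apply HU. Qed.

Lemma meas_ext O meas (A B : O -> Prop) : (forall w, A w <-> B w) -> meas A -> meas B.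
Proof. intros H HA. rewrite <- (pred_ext A B H). auto. Qed.

Lemma P_ext O (P : (O -> Prop) -> R) (A B : O -> Prop) : (forall w, A w <-> B w) -> P A = P B.
Proof. intros H. rewrite (pred_ext A B H). auto. Qed.

Lemma P_False O meas P : is_probability_space O meas P -> P (fun _ => False) = 0.
Proof.
  intros HP. pose proof (meas_False _ _ _ HP) as HF.
  destruct HP as (HT & HC & HU & Hnn & H1 & Hadd).
  specialize (Hadd (fun _ => fun _ => False) (fun _ => HF) ltac:(intros; auto)). cbv beta in Hadd.
  rewrite (P_ext _ P (fun w => exists n : nat, False) (fun _ => False)) in Hadd by (intros; split; [intros [_ []]|intros []]).
  set (c := P (fun _ => False)) in *.
  apply NNPP. intros Hc.
  assert (Hac : 0 < Rabs c) by (apply Rabs_pos_lt; auto).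
  destruct (Hadd 1 ltac:(lra)) as [N HN].
  destruct (nat_big (1 / Rabs c)) as [m Hm].
  specialize (HN (Nat.max N m) ltac:(lia)). rewrite sum_cte in HN. unfold Rdist in HN.
  replace (c * INR (S (Nat.max N m)) - c) with (c * INR (Nat.max N m)) in HN by (rewrite S_INR; ring).
  rewrite Rabs_mult, (Rabs_right (INR _)) in HN by (apply Rle_ge, pos_INR).
  assert (INR m <= INR (Nat.max N m)) by (apply le_INR; lia).
  assert (1 < Rabs c * INR m).
  { apply (Rmult_lt_compat_l (Rabs c)) in Hm; auto. unfold Rdiv in Hm.
    rewrite <- Rmult_assoc, Rmult_1_r, Rinv_r in Hm; lra. }
  nra.
Qed.

Lemma P_disj2 O meas P A B : is_probability_space O meas P -> meas A -> meas B ->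
  (forall w, A w -> B w -> False) -> P (fun w => A w \/ B w) = P A + P B.
Proof.
  intros HP HA HB Hd. pose proof (P_False _ _ _ HP) as PF. pose proof (meas_False _ _ _ HP) as HF.
  destruct HP as (HT & HC & HU & Hnn & H1 & Hadd).
  set (E := fun n : nat => match n with O => A | 1%nat => B | _ => fun _ => False end).
  assert (HE : forall n, meas (E n)) by (intros [|[|n]]; simpl; auto).
  assert (Hdis : forall i j w, i <> j -> E i w -> E j w -> False).
  { intros [|[|i]] [|[|j]] w Hij; simpl; try tauto; try lia; intros; eapply Hd; eauto. }
  specialize (Hadd E HE Hdis).
  rewrite (P_ext _ P (fun w => exists n, E n w) (fun w => A w \/ B w)) in Hadd.
  2:{ intros w; split. intros [[|[|n]] H]; unfold E in H; tauto.
      intros [H|H]; [exists 0%nat|exists 1%nat]; auto. }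
  apply (EC _ _ 1 _ Hadd). intros n Hn. induction n; [lia|].
  destruct n; simpl; auto. simpl in IHn. rewrite IHn by lia. simpl. rewrite PF. lra.
Qed.

Lemma P_mono O meas P A B : is_probability_space O meas P -> meas A -> meas B ->
  (forall w, A w -> B w) -> P A <= P B.
Proof.
  intros HP HA HB Hab.
  assert (HM : meas (fun w => B w /\ ~ A w)) by (apply meas_and with P; auto; apply meas_not with P; auto).
  rewrite (P_ext _ P B (fun w => A w \/ (B w /\ ~ A w))) by (intros w; split; [intros Hb; destruct (classic (A w)); tauto | intros [H|H]; [apply Hab; auto|tauto]]).
  rewrite P_disj2 with (meas := meas); auto. 2: tauto.
  assert (0 <= P (fun w => B w /\ ~ A w)) by (destruct HP as (_ & _ & _ & Hnn & _); apply Hnn; auto).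
  lra.
Qed.

Lemma P_nonneg O meas P A : is_probability_space O meas P -> meas A -> 0 <= P A.
Proof. intros (_ & _ & _ & Hnn & _) HA. auto. Qed.

Lemma P_or_le O meas P A B : is_probability_space O meas P -> meas A -> meas B ->
  P (fun w => A w \/ B w) <= P A + P B.
Proof.
  intros HP HA HB.
  assert (HM : meas (fun w => B w /\ ~ A w)) by (apply meas_and with P; auto; apply meas_not with P; auto).
  rewrite (P_ext _ P (fun w => A w \/ B w) (fun w => A w \/ (B w /\ ~ A w)))
    by (intros w; split; [intros [H|H]; [tauto|destruct (classic (A w)); tauto]|tauto]).
  rewrite P_disj2 with (meas := meas); auto. 2: tauto.
  pose proof (P_mono _ _ _ _ _ HP HM HB (fun w H => proj1 H)). lra.
Qed.

Lemma P_compl O meas P A : is_probability_space O meas P -> meas A -> P (fun w => ~ A w) = 1 - P A.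
Proof.
  intros HP HA. pose proof (meas_not _ _ _ _ HP HA).
  pose proof (P_disj2 _ _ _ _ _ HP HA H ltac:(intros w a b; apply b; exact a)). cbv beta in H0.
  rewrite (P_ext _ P (fun w => A w \/ ~ A w) (fun _ => True)) in H0 by (intros w; split; auto; intros _; apply classic).
  destruct HP as (_ & _ & _ & _ & H1 & _). lra.
Qed.

Lemma meas_ex_list O meas P {X : Type} (l : list X) (A : X -> O -> Prop) : is_probability_space O meas P ->
  (forall x, meas (A x)) -> meas (fun w => exists x, In x l /\ A x w).
Proof.
  intros HP HA. induction l as [|a l IH].
  - apply meas_ext with (fun _ => False). intros w; split; [tauto|intros (x & [] & _)].
    apply meas_False with P; auto.
  - apply meas_ext with (fun w => A a w \/ exists x, In x l /\ A x w).
    + intros w; split. intros [H|(x & H1 & H2)]; [exists a; simpl; auto|exists x; simpl; auto].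
      intros (x & [<-|H1] & H2); [left; auto|right; exists x; auto].
    + apply meas_or with P; auto.
Qed.

Lemma P_list_disj O meas P {X : Type} (l : list X) (A : X -> O -> Prop) : is_probability_space O meas P ->
  NoDup l -> (forall x, meas (A x)) -> (forall x y w, x <> y -> A x w -> A y w -> False) ->
  P (fun w => exists x, In x l /\ A x w) = lsum (fun x => P (A x)) l.
Proof.
  intros HP Hnd HA Hd. induction l as [|a l IH].
  - simpl. rewrite (P_ext _ P _ (fun _ => False)). apply P_False with meas; auto.
    intros w; split; [intros (x & [] & _)|intros []].
  - inversion Hnd; subst. simpl.
    rewrite (P_ext _ P _ (fun w => A a w \/ exists x, In x l /\ A x w)).
    + rewrite P_disj2 with (meas := meas); auto. rewrite IH; auto.
      apply meas_ex_list with P; auto.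
      intros w G1 (x & Gx & G2). apply (Hd a x w); auto. intro; subst; auto.
    + intros w; split. intros (x & [<-|G1] & G2); [left; auto|right; exists x; auto].
      intros [G|(x & G1 & G2)]; [exists a; simpl; auto|exists x; simpl; auto].
Qed.

Lemma P_cunion_zero O meas P (E : nat -> O -> Prop) : is_probability_space O meas P ->
  (forall n, meas (E n)) -> (forall n, P (E n) = 0) -> P (fun w => exists n, E n w) = 0.
Proof.
  intros HP HE HZ.
  set (D := fun n w => E n w /\ ~ (exists i, In i (seq 0 n) /\ E i w)).
  assert (HD : forall n, meas (D n)).
  { intros n. apply meas_and with P; auto. apply meas_not with P; auto. apply meas_ex_list with P; auto. }
  assert (HDz : forall n, P (D n) = 0).
  { intros n. pose proof (P_mono _ _ _ _ _ HP (HD n) (HE n) (fun w H => proj1 H)).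
    pose proof (P_nonneg _ _ _ _ HP (HD n)). rewrite HZ in H. lra. }
  assert (Hdis : forall i j w, i <> j -> D i w -> D j w -> False).
  { intros i j w Hij [Hi Ni] [Hj Nj]. destruct (Nat.lt_ge_cases i j).
    - apply Nj. exists i. split; auto. apply in_seq. lia.
    - apply Ni. exists j. split; auto. apply in_seq. lia. }
  destruct HP as (HT & HC & HU & Hnn & H1 & Hadd).
  specialize (Hadd D HD Hdis).
  rewrite (P_ext _ P (fun w => exists n, D n w) (fun w => exists n, E n w)) in Hadd.
  - apply (EC _ _ 0 _ Hadd). intros n _. induction n; simpl; rewrite ?IHn; rewrite HDz; lra.
  - intros w; split. intros [n [H _]]; eauto.
    intros [n Hn]. induction n as [n IH] using (well_founded_induction lt_wf).
    destruct (classic (exists i, In i (seq 0 n) /\ E i w)) as [(i & Hi & Ei)|Hno].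
    + apply in_seq in Hi. apply (IH i); auto. lia.
    + exists n. split; auto.
Qed.


Open Scope R_scope.

Definition thenc (n : nat) : theta :=
  match (n mod 3)%nat with 0%nat => Burger (n / 3) | 1%nat => Order (n / 3) | _ => Flex end.

Lemma thenc_surj c : exists n, thenc n = c.
Proof.
  destruct c as [i|i|].
  - exists (3 * i)%nat. unfold thenc. replace ((3 * i) mod 3)%nat with 0%nat by (rewrite Nat.mul_comm, Nat.Div0.mod_mul; auto).
    rewrite Nat.mul_comm, Nat.div_mul by lia. auto.
  - exists (3 * i + 1)%nat. unfold thenc.
    replace ((3 * i + 1) mod 3)%nat with 1%nat.
    + replace ((3 * i + 1) / 3)%nat with i; auto.
      apply Nat.div_unique with 1%nat; lia.
    + apply Nat.mod_unique with i; lia.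
  - exists 2%nat. reflexivity.
Qed.

Lemma meas_det O meas P (X : Z -> O -> theta) : is_probability_space O meas P ->
  (forall n c, meas (fun w => X n w = c)) ->
  forall L (E : O -> Prop), (forall w w', (forall j, In j L -> X j w = X j w') -> (E w <-> E w')) -> meas E.
Proof.
  intros HP HX1 L. induction L as [|j L IH]; intros E HE.
  - destruct (classic (exists w, E w)) as [[w0 H0]|Hn].
    + apply meas_ext with (fun _ => True). intros w; split; auto. intros _.
      apply (HE w0 w); auto. intros _ []. destruct HP; auto.
    + apply meas_ext with (fun _ => False). intros w; split; [tauto|]. intros H; apply Hn; eauto.
      apply meas_False with P; auto.
  - set (Ec := fun c w => exists w', X j w' = c /\ (forall i, In i L -> X i w' = X i w) /\ E w').
    assert (HEc : forall c, meas (Ec c)).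
    { intros c. apply IH. intros w1 w2 Hw. unfold Ec. split.
      - intros (w' & H1 & H2 & H3). exists w'. repeat split; auto. intros i Hi. rewrite H2, Hw; auto.
      - intros (w' & H1 & H2 & H3). exists w'. repeat split; auto. intros i Hi. rewrite H2, Hw; auto. }
    apply meas_ext with (fun w => exists n, X j w = thenc n /\ Ec (thenc n) w).
    + intros w; split.
      * intros (n & H1 & w' & H2 & H3 & H4). apply (HE w' w); auto.
        intros i [<-|Hi]; [congruence|auto].
      * intros H. destruct (thenc_surj (X j w)) as [n Hn]. exists n. split; auto.
        exists w. repeat split; auto.
    + apply meas_ex_nat with P; auto. intros n. apply meas_and with P; auto.
Qed.

Definition wl {O} (X : Z -> O -> theta) (w : O) (L : list Z) : list theta := map (fun j => X j w) L.

Fixpoint zl (a : Z) (n : nat) : list Z :=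
  match n with O => [] | S n' => a :: zl (a + 1)%Z n' end.

Lemma F2_iff {O} (X : Z -> O -> theta) w ns cs : Forall2 (fun n c => X n w = c) ns cs <-> wl X w ns = cs.
Proof.
  unfold wl. revert cs; induction ns as [|n ns IH]; intros cs; split; intros H.
  - inversion H; auto.
  - subst; constructor.
  - inversion H; subst. simpl. f_equal. apply IH; auto.
  - destruct cs; simpl in H; inversion H. constructor; auto. apply IH; auto.
Qed.

Lemma wl_det {O} (X : Z -> O -> theta) L w w' : (forall j, In j L -> X j w = X j w') -> wl X w L = wl X w' L.
Proof. intros H. unfold wl. apply map_ext_in. auto. Qed.

Lemma zl_lt a n j : In j (zl a n) -> (a <= j < a + Z.of_nat n)%Z.
Proof. revert a; induction n; intros a H; simpl in H; [tauto|]. destruct H as [<-|H]; [lia|].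
  apply IHn in H. lia. Qed.

Definition wt k p (cs : list theta) : R := fold_right Rmult 1 (map (law k p) cs).

Lemma NoDup_Sig k : NoDup (Sig k).
Proof.
  unfold Sig. apply NoDup_app.
  - apply Injective_map_NoDup; [intros x y H; inversion H; auto|apply seq_NoDup].
  - apply NoDup_app.
    + apply Injective_map_NoDup; [intros x y H; inversion H; auto|apply seq_NoDup].
    + constructor; [simpl; tauto|constructor].
    + intros a Ha. apply in_map_iff in Ha as (x & <- & _). simpl. intros [H|[]]; discriminate.
  - intros a Ha. apply in_map_iff in Ha as (x & <- & _). rewrite in_app_iff, in_map_iff. simpl.
    intros [(y & H & _)|[H|[]]]; discriminate.
Qed.

Lemma bridge k p (Hk : (1 <= k)%nat) O meas P (X : Z -> O -> theta)
  (HP : is_probability_space O meas P) (HX : iid_with_law O meas P X k p) :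
  forall n a ns cs (g : list theta -> bool), NoDup ns -> (forall j, In j ns -> (j < a)%Z) -> length ns = length cs ->
  P (fun w => wl X w ns = cs /\ g (wl X w (zl a n)) = true) = wt k p cs * Ew k p n (fun u => if g u then 1 else 0).
Proof.
  destruct HX as (HX1 & HX2).
  assert (Hdet : forall L (E : O -> Prop), (forall w w', (forall j, In j L -> X j w = X j w') -> (E w <-> E w')) -> meas E)
    by (apply meas_det with P; auto).
  assert (Hcyl : forall ns cs, NoDup ns -> length ns = length cs -> P (fun w => wl X w ns = cs) = wt k p cs).
  { intros ns cs H1 H2. unfold wt. rewrite <- (HX2 ns cs H1 H2). apply P_ext. intros w. rewrite F2_iff. tauto. }
  intros n. induction n as [|n IH]; intros a ns cs g Hnd Hlt Hlen.
  - simpl. destruct (g []) eqn:Eg.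
    + rewrite (P_ext _ P _ (fun w => wl X w ns = cs)) by (intros w; split; [tauto|intros; split; auto]).
      rewrite Hcyl; auto. lra.
    + rewrite (P_ext _ P _ (fun _ => False)) by (intros w; split; [intros [_ H]; discriminate|tauto]).
      rewrite (P_False _ _ _ HP). lra.
  - set (Ev := fun w => wl X w ns = cs /\ g (wl X w (zl a (S n))) = true).
    set (A := fun c w => wl X w (a :: ns) = c :: cs /\ g (c :: wl X w (zl (a + 1) n)) = true).
    assert (HA : forall c, meas (A c)).
    { intros c. apply (Hdet ((a :: ns) ++ zl (a + 1) n)). intros w w' Hw. unfold A.
      rewrite (wl_det X (a :: ns) w w'), (wl_det X (zl (a+1) n) w w'); [tauto| |];
      intros j Hj; apply Hw; apply in_app_iff; auto. }
    assert (HEv : meas Ev).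
    { apply (Hdet (ns ++ zl a (S n))). intros w w' Hw. unfold Ev.
      rewrite (wl_det X ns w w'), (wl_det X (zl a (S n)) w w'); [tauto| |];
      intros j Hj; apply Hw; apply in_app_iff; auto. }
    assert (HIn : meas (fun w => In (X a w) (Sig k))).
    { apply (Hdet [a]). intros w w' Hw. rewrite Hw; simpl; auto. tauto. }
    assert (HB : meas (fun w => Ev w /\ ~ In (X a w) (Sig k))).
    { apply meas_and with P; auto. apply meas_not with P; auto. }
    assert (HU : meas (fun w => exists c, In c (Sig k) /\ A c w)) by (apply meas_ex_list with P; auto).
    rewrite (P_ext _ P Ev (fun w => (exists c, In c (Sig k) /\ A c w) \/ (Ev w /\ ~ In (X a w) (Sig k)))).
    2:{ intros w. unfold Ev, A. simpl. split.
        - intros [H1 H2]. destruct (classic (In (X a w) (Sig k))) as [Hi|Hi].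
          + left. exists (X a w). split; auto. unfold wl in *. simpl. rewrite H1. auto.
          + right. auto.
        - intros [(c & Hc & H1 & H2)|H]; [|tauto]. unfold wl in *. simpl in H1. inversion H1. subst.
          split; auto. }
    rewrite P_disj2 with (meas := meas); auto.
    2:{ intros w (c & Hc & H1 & _) (_ & H2). apply H2. unfold wl in H1. simpl in H1. inversion H1. subst; auto. }
    assert (Hzero : P (fun w => Ev w /\ ~ In (X a w) (Sig k)) = 0).
    { pose proof (P_mono _ _ _ _ _ HP HB (meas_not _ _ _ _ HP HIn) (fun w H => proj2 H)).
      rewrite P_compl with (meas := meas) in H; auto.
      assert (P (fun w => In (X a w) (Sig k)) = 1).
      { rewrite (P_ext _ P _ (fun w => exists c, In c (Sig k) /\ (fun c w => X a w = c) c w)) by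
          (intros w; split; [intros; exists (X a w); auto|intros (c & H1 & H2); subst; auto]).
        rewrite P_list_disj with (meas := meas); auto.
        - rewrite (lsum_ext_in _ (law k p)). apply law_sum; auto.
          intros c _. rewrite (P_ext _ P _ (fun w => wl X w [a] = [c])).
          + rewrite Hcyl; auto. unfold wt. simpl. lra. constructor; auto. constructor.
          + intros w. unfold wl. simpl. split; [intros ->; auto|intros H'; inversion H'; auto].
        - apply NoDup_Sig.
        - intros x y w Hxy H1 H2. congruence. }
      pose proof (P_nonneg _ _ _ _ HP HB). lra. }
    rewrite Hzero, Rplus_0_r.
    rewrite P_list_disj with (meas := meas); auto.
    2: apply NoDup_Sig.
    2:{ intros x y w Hxy (H1 & _) (H2 & _). unfold wl in *. simpl in *. inversion H1. inversion H2. congruence. }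
    unfold A. simpl Ew. rewrite <- lsum_scal. apply lsum_ext_in. intros c Hc.
    rewrite (IH (a + 1)%Z (a :: ns) (c :: cs) (fun u => g (c :: u))).
    + unfold wt. simpl. lra.
    + constructor; auto. intros Ha. specialize (Hlt a Ha). lia.
    + intros j [<-|Hj]; [lia|]. specialize (Hlt j Hj). lia.
    + simpl. auto.
Qed.


Open Scope Z_scope.

Lemma zl_seq a d s : map (fun i => a + Z.of_nat i) (seq s d) = zl (a + Z.of_nat s) d.
Proof. revert s; induction d; intros s; simpl; auto. f_equal. rewrite IHd. f_equal. lia. Qed.

Lemma positions_zl a b : positions a b = zl a (Z.to_nat (b - a)).
Proof. unfold positions. rewrite zl_seq. f_equal. lia. Qed.

Lemma zl_snoc a d : zl a (S d) = zl a d ++ [a + Z.of_nat d].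
Proof. revert a; induction d; intros a; simpl; [f_equal; lia|].
  specialize (IHd (a + 1)). simpl in IHd. rewrite IHd. f_equal. f_equal. f_equal. lia. Qed.

Lemma zl_add a d1 d2 : zl a (d1 + d2) = zl a d1 ++ zl (a + Z.of_nat d1) d2.
Proof. revert a; induction d1; intros a; simpl; [f_equal; lia|].
  rewrite IHd1. f_equal. f_equal. f_equal. lia. Qed.

Definition SB (x : Z -> theta) (a : Z) (d : nat) : list (Z * nat) :=
  fold_left step (map (fun j => (j, x j)) (zl a d)) [].

Lemma stack_SB x a b : stack_between x a b = SB x a (Z.to_nat (b - a)).
Proof. unfold stack_between, SB. rewrite positions_zl. auto. Qed.

Lemma SB_S x a d : SB x a (S d) = step (SB x a d) (a + Z.of_nat d, x (a + Z.of_nat d)).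
Proof. unfold SB. rewrite zl_snoc, map_app, fold_left_app. auto. Qed.

Lemma SB_det x y a d : (forall j, In j (zl a d) -> x j = y j) -> SB x a d = SB y a d.
Proof. intros H. unfold SB. f_equal. apply map_ext_in. intros j Hj. rewrite H; auto. Qed.

Lemma remove_decomp i s j s' : remove_first_type i s = Some (j, s') ->
  exists A B, s = A ++ (j, i) :: B /\ s' = A ++ B.
Proof.
  revert s'; induction s as [|[j0 t] s IH]; intros s' H; simpl in H; [discriminate|].
  destruct (Nat.eqb_spec t i).
  - inversion H; subst. exists [], s'. auto.
  - destruct (remove_first_type i s) as [[j1 s1]|] eqn:E; [|discriminate]. inversion H; subst.
    destruct (IH _ eq_refl) as (A & B & -> & ->). exists ((j0, t) :: A), B. auto.
Qed.

Lemma consume_decomp c s j s' : consume c s = Some (j, s') ->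
  exists A B t, s = A ++ (j, t) :: B /\ s' = A ++ B.
Proof.
  destruct c; simpl; intros H; [discriminate| |].
  - destruct (remove_decomp _ _ _ _ H) as (A & B & H1 & H2). eauto.
  - destruct s as [|[j0 t] s]; [discriminate|]. inversion H; subst. exists [], s', t. auto.
Qed.

Lemma step_in s j c e : In e (step s (j, c)) -> In e s \/ fst e = j.
Proof.
  unfold step. destruct c.
  - intros [<-|H]; auto.
  - destruct (consume _ s) as [[j1 s1]|] eqn:E; auto.
    destruct (consume_decomp _ _ _ _ E) as (A & B & t & -> & ->). intros H. left.
    apply in_app_iff in H. apply in_app_iff. simpl. tauto.
  - destruct (consume _ s) as [[j1 s1]|] eqn:E; auto.
    destruct (consume_decomp _ _ _ _ E) as (A & B & t & -> & ->). intros H. left.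
    apply in_app_iff in H. apply in_app_iff. simpl. tauto.
Qed.

Lemma step_removal s j c e : In e s -> ~ In e (step s (j, c)) -> exists s', consume c s = Some (fst e, s').
Proof.
  intros Hin Hout. unfold step in Hout. destruct c.
  - exfalso. apply Hout. right; auto.
  - destruct (consume _ s) as [[j1 s1]|] eqn:E; [|tauto].
    destruct (consume_decomp _ _ _ _ E) as (A & B & t & -> & ->).
    apply in_app_iff in Hin. destruct Hin as [Hin|[<-|Hin]]; try (exfalso; apply Hout; apply in_app_iff; tauto).
    simpl. eauto.
  - destruct (consume _ s) as [[j1 s1]|] eqn:E; [|tauto].
    destruct (consume_decomp _ _ _ _ E) as (A & B & t & -> & ->).
    apply in_app_iff in Hin. destruct Hin as [Hin|[<-|Hin]]; try (exfalso; apply Hout; apply in_app_iff; tauto).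
    simpl. eauto.
Qed.

Lemma SB_pos x a d e : In e (SB x a d) -> a <= fst e < a + Z.of_nat d.
Proof.
  induction d; [simpl; tauto|]. rewrite SB_S. intros H. apply step_in in H as [H|H].
  - apply IHd in H. lia.
  - lia.
Qed.

Lemma remove_app i T B : remove_first_type i (T ++ B) =
  match remove_first_type i T with Some (j, T') => Some (j, T' ++ B)
  | None => match remove_first_type i B with Some (j, B') => Some (j, T ++ B') | None => None end end.
Proof.
  induction T as [|[j0 t] T IH]; simpl.
  - destruct (remove_first_type i B) as [[]|]; auto.
  - destruct (Nat.eqb t i); auto. rewrite IH.
    destruct (remove_first_type i T) as [[]|]; auto. destruct (remove_first_type i B) as [[]|]; auto.
Qed.

Lemma consume_app c T B : consume c (T ++ B) =
  match consume c T with Some (j, T') => Some (j, T' ++ B)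
  | None => match consume c B with Some (j, B') => Some (j, T ++ B') | None => None end end.
Proof.
  destruct c; simpl; auto.
  - apply remove_app.
  - destruct T as [|[]]; simpl; auto. destruct B as [|[]]; auto.
Qed.

Lemma step_app T B j c : exists B', step (T ++ B) (j, c) = step T (j, c) ++ B' /\ incl B' B /\ (length B' <= length B)%nat.
Proof.
  unfold step. destruct c.
  - exists B. split; auto. split; [intros ? ?; auto|lia].
  - rewrite consume_app. destruct (consume (Order n) T) as [[]|].
    + exists B. split; auto. split; [intros ? ?; auto|lia].
    + destruct (consume (Order n) B) as [[j1 B1]|] eqn:E.
      * exists B1. split; auto. destruct (consume_decomp _ _ _ _ E) as (A & C & t & -> & ->).
        split. intros e He. apply in_app_iff in He. apply in_app_iff. simpl. tauto.
        rewrite !length_app. simpl. lia.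
      * exists B. split; auto. split; [intros ? ?; auto|lia].
  - rewrite consume_app. destruct (consume Flex T) as [[]|].
    + exists B. split; auto. split; [intros ? ?; auto|lia].
    + destruct (consume Flex B) as [[j1 B1]|] eqn:E.
      * exists B1. split; auto. destruct (consume_decomp _ _ _ _ E) as (A & C & t & -> & ->).
        split. intros e He. apply in_app_iff in He. apply in_app_iff. simpl. tauto.
        rewrite !length_app. simpl. lia.
      * exists B. split; auto. split; [intros ? ?; auto|lia].
Qed.

Lemma SB_split x a d1 d2 : exists B', SB x a (d1 + d2) = SB x (a + Z.of_nat d1) d2 ++ B'
  /\ incl B' (SB x a d1) /\ (length B' <= length (SB x a d1))%nat.
Proof.
  induction d2.
  - exists (SB x a d1). rewrite Nat.add_0_r. split; auto. split; [intros ? ?; auto|lia].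
  - destruct IHd2 as (B & E & H1 & H2).
    rewrite Nat.add_succ_r, SB_S, E, SB_S.
    destruct (step_app (SB x (a + Z.of_nat d1) d2) B (a + Z.of_nat (d1 + d2)) (x (a + Z.of_nat (d1 + d2))))
      as (B' & E' & H3 & H4).
    exists B'. rewrite E'. replace (a + Z.of_nat d1 + Z.of_nat d2) with (a + Z.of_nat (d1 + d2)) by lia.
    split; auto. split; [intros e He; auto|lia].
Qed.

Lemma tremove_snd i s : tremove i (map snd s) = option_map (fun r => map snd (snd r)) (remove_first_type i s).
Proof.
  induction s as [|[j t] s IH]; simpl; auto. destruct (Nat.eqb t i); auto. rewrite IH.
  destruct (remove_first_type i s) as [[]|]; auto.
Qed.

Lemma tcons_snd c s : tcons c (map snd s) = option_map (fun r => map snd (snd r)) (consume c s).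
Proof. destruct c; simpl; auto. apply tremove_snd. destruct s as [|[]]; auto. Qed.

Lemma step_snd s j c : map snd (step s (j, c)) = tstep (map snd s) c.
Proof.
  unfold step, tstep. destruct c; auto; rewrite tcons_snd; destruct (consume _ s) as [[]|]; auto.
Qed.

Lemma fold_snd ws s : map snd (fold_left step ws s) = trun (map snd ws) (map snd s).
Proof.
  revert s; induction ws as [|[j c] ws IH]; intros s; [reflexivity|].
  change (fold_left step ((j,c)::ws) s) with (fold_left step ws (step s (j,c))).
  rewrite IH, step_snd. reflexivity.
Qed.

Lemma SB_snd x a d : map snd (SB x a d) = trun (map x (zl a d)) [].
Proof. unfold SB. rewrite fold_snd, map_map. auto. Qed.


Open Scope Z_scope.

Lemma U_SB x a d : U (map x (zl a d)) = length (SB x a d).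
Proof. unfold U. rewrite <- SB_snd, length_map. auto. Qed.

Lemma burger_case x m i : x m = Burger i -> ~ phi_finite x m -> forall t, su (map x (zl m (S t))) = 1%nat.
Proof.
  intros Hm Hnp t.
  assert (Hin : forall d, In (m, i) (SB x m (S d))).
  { induction d.
    - rewrite SB_S. simpl. rewrite Z.add_0_r, Hm. simpl. auto.
    - destruct (classic (In (m, i) (SB x m (S (S d))))) as [H|H]; auto.
      rewrite SB_S in H. destruct (step_removal _ _ _ _ IHd H) as [s' Hs]. simpl fst in Hs.
      exfalso. apply Hnp. exists (m + Z.of_nat (S d)). left. split; [lia|].
      rewrite stack_SB. replace (Z.to_nat (m + Z.of_nat (S d) - m)) with (S d) by lia.
      rewrite Hs. auto. }
  destruct (SB_split x m 1 t) as (B & E & H1 & H2).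
  specialize (Hin t). simpl plus in E. rewrite E in Hin.
  assert (HB : In (m, i) B).
  { apply in_app_iff in Hin as [H|H]; auto. apply SB_pos in H. simpl in H. lia. }
  assert (length (SB x m 1) = 1%nat) by (rewrite SB_S; simpl; rewrite Z.add_0_r, Hm; auto).
  assert (length B = 1%nat) by (destruct B; [destruct HB|]; simpl in *; lia).
  unfold su. simpl tl. rewrite !U_SB. simpl plus in E. rewrite E, length_app.
  replace (m + Z.of_nat 1) with (m + 1) by lia. lia.
Qed.

Lemma order_case x m : (forall i, x m <> Burger i) -> ~ phi_finite x m ->
  forall t : nat, vu (map x (zl (m - Z.of_nat t) (S t))) = 1%nat.
Proof.
  intros Hm Hnp t.
  rewrite zl_snoc, map_app. replace (m - Z.of_nat t + Z.of_nat t) with m by lia.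
  unfold vu. change (map x [m]) with [x m]. rewrite removelast_last, last_last, <- SB_snd.
  assert (Hc : consume (x m) (SB x (m - Z.of_nat t) t) = None).
  { destruct (consume (x m) (SB x (m - Z.of_nat t) t)) as [[j s']|] eqn:E; auto. exfalso.
    destruct (consume_decomp _ _ _ _ E) as (A & C & tt & HA & _).
    assert (Hj : In (j, tt) (SB x (m - Z.of_nat t) t)) by (rewrite HA; apply in_app_iff; simpl; auto).
    apply SB_pos in Hj. simpl in Hj.
    set (d1 := Z.to_nat (j - (m - Z.of_nat t))). set (d2 := (t - d1)%nat).
    destruct (SB_split x (m - Z.of_nat t) d1 d2) as (B & E2 & H1 & H2).
    replace (d1 + d2)%nat with t in E2 by lia.
    replace (m - Z.of_nat t + Z.of_nat d1) with j in E2 by lia.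
    rewrite E2, consume_app in E.
    destruct (consume (x m) (SB x j d2)) as [[j2 T']|] eqn:E3.
    - inversion E; subst j2. apply Hnp. exists j. right. split; [lia|].
      rewrite stack_SB. replace (Z.to_nat (m - j)) with d2 by lia. rewrite E3. auto.
    - destruct (consume (x m) B) as [[j3 B3]|] eqn:E4; [|discriminate]. inversion E; subst j3.
      destruct (consume_decomp _ _ _ _ E4) as (A' & C' & t' & HB' & _).
      assert (In (j, t') (SB x (m - Z.of_nat t) d1)) by (apply H1; rewrite HB'; apply in_app_iff; simpl; auto).
      apply SB_pos in H. simpl in H. lia. }
  unfold Pv. rewrite tcons_snd, Hc. destruct (x m) eqn:Ex; auto. exfalso; eapply Hm; eauto.
Qed.


Open Scope R_scope.

Lemma small_su k p eps : (1 <= k)%nat -> 0 <= p <= 1 -> 0 < eps ->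
  exists t, Ew k p (S t) (fun w => INR (su w)) < eps.
Proof.
  intros Hk Hp He. apply NNPP. intros Hn.
  apply (no_linear k p eps Hk Hp He). intros N _.
  induction N.
  - simpl. unfold RU, U. simpl. lra.
  - rewrite DU_step by auto. rewrite S_INR.
    assert (eps <= Ew k p (S N) (fun w => INR (su w))).
    { apply Rnot_lt_le. intro. apply Hn. exists N. auto. }
    lra.
Qed.

Lemma small_vu k p eps : (1 <= k)%nat -> 0 <= p <= 1 -> 0 < eps ->
  exists t, Ew k p (S t) (fun w => INR (vu w)) < eps.
Proof.
  intros Hk Hp He. apply NNPP. intros Hn.
  apply (no_linear k p eps Hk Hp He). intros N _.
  rewrite EU_EV by auto.
  induction N.
  - simpl. unfold RV, Vc. simpl. lra.
  - rewrite DV_step by auto. rewrite S_INR.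
    assert (eps <= Ew k p (S N) (fun w => INR (vu w))).
    { apply Rnot_lt_le. intro. apply Hn. exists N. auto. }
    lra.
Qed.

Lemma matched_det x y a b : (forall j, In j (b :: zl a (Z.to_nat (b - a))) -> x j = y j) ->
  (matched x a b <-> matched y a b).
Proof.
  intros H. unfold matched. rewrite !stack_SB, (SB_det x y) by (intros j Hj; apply H; simpl; auto).
  rewrite (H b) by (simpl; auto). tauto.
Qed.

Lemma Z_nat_cover (P0 : Z -> Prop) : (exists z, P0 z) <-> exists n : nat, P0 (Z.of_nat n) \/ P0 (- Z.of_nat n)%Z.
Proof.
  split.
  - intros [z Hz]. exists (Z.to_nat (Z.abs z)). destruct (Z.le_gt_cases 0 z).
    + left. replace (Z.of_nat (Z.to_nat (Z.abs z))) with z by lia. auto.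
    + right. replace (- Z.of_nat (Z.to_nat (Z.abs z)))%Z with z by lia. auto.
  - intros [n [H|H]]; eauto.
Qed.

Lemma phi_zero k p (Hk : (1 <= k)%nat) (Hp : 0 <= p <= 1) O meas P (X : Z -> O -> theta)
  (HP : is_probability_space O meas P) (HX : iid_with_law O meas P X k p) (m : Z) :
  meas (fun w => ~ phi_finite (fun n => X n w) m) /\ P (fun w => ~ phi_finite (fun n => X n w) m) = 0.
Proof.
  assert (Hdet : forall L (E : O -> Prop), (forall w w', (forall j, In j L -> X j w = X j w') -> (E w <-> E w')) -> meas E)
    by (apply meas_det with P; auto; apply HX).
  assert (Hmt : forall a b, meas (fun w => matched (fun n => X n w) a b)).
  { intros a b. apply (Hdet (b :: zl a (Z.to_nat (b - a)))). intros w w' H. apply matched_det. auto. }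
  assert (HM : meas (fun w => ~ phi_finite (fun n => X n w) m)).
  { apply meas_not with P; auto. unfold phi_finite.
    apply meas_ext with (fun w => exists n : nat,
      (fun z => matched (fun n => X n w) m z \/ matched (fun n => X n w) z m) (Z.of_nat n) \/
      (fun z => matched (fun n => X n w) m z \/ matched (fun n => X n w) z m) (- Z.of_nat n)%Z).
    - intros w. rewrite <- (Z_nat_cover (fun z => matched (fun n => X n w) m z \/ matched (fun n => X n w) z m)). tauto.
    - apply meas_ex_nat with P; auto. intros n. cbv beta.
      repeat apply meas_or with P; auto. }
  split; auto.
  pose proof (P_nonneg _ _ _ _ HP HM) as Hnn.
  apply NNPP. intros Hne.
  set (eps := P (fun w => ~ phi_finite (fun n => X n w) m) / 4).
  assert (He : 0 < eps) by (unfold eps; lra).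
  destruct (small_su k p eps Hk Hp He) as [t1 Ht1].
  destruct (small_vu k p eps Hk Hp He) as [t2 Ht2].
  set (BB := fun w => wl X w [] = [] /\ (fun u => Nat.eqb (su u) 1) (wl X w (zl m (S t1))) = true).
  set (BO := fun w => wl X w [] = [] /\ (fun u => Nat.eqb (vu u) 1) (wl X w (zl (m - Z.of_nat t2) (S t2))) = true).
  assert (PB : P BB < eps).
  { unfold BB. rewrite (bridge k p Hk O meas P X HP HX (S t1) m [] [] (fun u => Nat.eqb (su u) 1) (NoDup_nil _) ltac:(intros j [])
         eq_refl). unfold wt. simpl map. simpl fold_right. rewrite Rmult_1_l.
    eapply Rle_lt_trans; [|exact Ht1]. apply Ew_le; auto. intros w _ _.
    destruct (Nat.eqb_spec (su w) 1); [rewrite e; simpl; lra|apply pos_INR]. }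
  assert (PO : P BO < eps).
  { unfold BO. rewrite (bridge k p Hk O meas P X HP HX (S t2) (m - Z.of_nat t2) [] [] (fun u => Nat.eqb (vu u) 1) (NoDup_nil _) ltac:(intros j [])
         eq_refl). unfold wt. simpl map. simpl fold_right. rewrite Rmult_1_l.
    eapply Rle_lt_trans; [|exact Ht2]. apply Ew_le; auto. intros w _ _.
    destruct (Nat.eqb_spec (vu w) 1); [rewrite e; simpl; lra|apply pos_INR]. }
  assert (MB : meas BB).
  { apply (Hdet (zl m (S t1))). intros w w' H. unfold BB. rewrite (wl_det X (zl m (S t1)) w w' H). tauto. }
  assert (MO : meas BO).
  { apply (Hdet (zl (m - Z.of_nat t2) (S t2))). intros w w' H. unfold BO.
    rewrite (wl_det X (zl (m - Z.of_nat t2) (S t2)) w w' H). tauto. }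
  assert (Hsub : forall w, ~ phi_finite (fun n => X n w) m -> BB w \/ BO w).
  { intros w Hw. unfold BB, BO, wl. cbv beta.
    destruct (X m w) eqn:Ex.
    - left. split; auto. rewrite (burger_case (fun n => X n w) m n Ex Hw t1). auto.
    - right. split; auto. rewrite (order_case (fun n => X n w) m ltac:(intros i; cbv beta; rewrite Ex; discriminate) Hw t2). auto.
    - right. split; auto. rewrite (order_case (fun n => X n w) m ltac:(intros i; cbv beta; rewrite Ex; discriminate) Hw t2). auto. }
  pose proof (P_mono _ _ _ _ _ HP HM (meas_or _ _ _ _ _ HP MB MO) Hsub).
  pose proof (P_or_le _ _ _ _ _ HP MB MO). unfold eps in *. lra.
Qed.


Open Scope R_scope.

Theorem proposition2p1
  (k : nat) (p : R) (Hk : (2 <= k)%nat) (Hp : 0 <= p <= 1)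
  (Omega : Type) (meas : (Omega -> Prop) -> Prop) (P : (Omega -> Prop) -> R)
  (HP : is_probability_space Omega meas P)
  (X : Z -> Omega -> theta) (HX : iid_with_law Omega meas P X k p) :
  exists A : Omega -> Prop,
    meas A /\ P A = 1 /\
    forall w, A w -> forall m : Z, phi_finite (fun n => X n w) m.
Proof.
  assert (Hk1 : (1 <= k)%nat) by lia.
  set (E := fun (n : nat) w => ~ phi_finite (fun n => X n w) (Z.of_nat n) \/ ~ phi_finite (fun n => X n w) (- Z.of_nat n)%Z).
  assert (HE : forall n, meas (E n)).
  { intros n. apply meas_or with P; auto; apply (phi_zero k p Hk1 Hp Omega meas P X HP HX). }
  assert (HEz : forall n, P (E n) = 0).
  { intros n. pose proof (P_or_le _ _ _ _ _ HP (proj1 (phi_zero k p Hk1 Hp Omega meas P X HP HX (Z.of_nat n)))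
                             (proj1 (phi_zero k p Hk1 Hp Omega meas P X HP HX (- Z.of_nat n)%Z))).
    rewrite (proj2 (phi_zero k p Hk1 Hp Omega meas P X HP HX (Z.of_nat n))),
            (proj2 (phi_zero k p Hk1 Hp Omega meas P X HP HX (- Z.of_nat n)%Z)) in H.
    pose proof (P_nonneg _ _ _ _ HP (HE n)). fold (E n) in H. lra. }
  pose proof (P_cunion_zero _ _ _ E HP HE HEz) as Hz.
  assert (HU : meas (fun w => exists n, E n w)) by (apply meas_ex_nat with P; auto).
  exists (fun w => ~ exists n, E n w). split; [|split].
  - apply meas_not with P; auto.
  - rewrite P_compl with (meas := meas); auto. lra.
  - intros w Hw m. apply NNPP. intros Hm. apply Hw.
    exists (Z.to_nat (Z.abs m)). unfold E. destruct (Z.le_gt_cases 0 m).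
    + left. replace (Z.of_nat (Z.to_nat (Z.abs m))) with m by lia. auto.
    + right. replace (- Z.of_nat (Z.to_nat (Z.abs m)))%Z with m by lia. auto.
Qed.
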